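(* Let $n\ge1$ and $m$ be integers, $\beta>0$, $0<\gamma\le 1$. Let $(s,z)$ be the Nielsen–Olesen vortex profile (see context) and set $$x=(\gamma-1)z-\frac{2\gamma n+m}{2r},\qquad y=\gamma z-\frac{2\gamma n+m}{2r}.$$ Suppose real functions $u,v$ on $(0,\infty)$, not both identically zero, satisfy either the equations \begin{align*} &v''+\tfrac{v'}{r}-\tfrac{v}{r^2}+2\big(2y'u+yu'+\tfrac{1}{r}yu\big)-4vu^2-\gamma v s^2=0,\\ &v'y-vy'+\big(2y^2+\tfrac{\gamma}{2}s^2+2v^2\big)u=0, \end{align*} or these same equations linearized in $(u,v)$ (i.e. with the terms $-4vu^2$ and $2v^2u$ omitted), together with the finite-energy boundary conditions $u=u_0r^k(1+o(1))$, $v=v_0r^k(1+o(1))$ as $r\to0$ for some $k>-\tfrac12$, and exponential decay of $u,v$ (like $e^{-\sqrt\gamma\, r}$ up to powers of $r$) as $r\to\infty$. Then $-2n<m<0$.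
   Context: The Nielsen–Olesen vortex profile $(s,z)$ with winding number $n$ consists of real functions on $(0,\infty)$ solving $s''+\frac{s'}{r}-[z^2+\frac{\beta}{2}(s^2-1)]s=0$ and $z''+\frac{z'}{r}-\frac{z}{r^2}-zs^2=0$, with $s=s_0r^n(1+o(1))$, $z=\frac nr+z_0r+o(r)$ as $r\to0$ and $s\to1$, $z\to0$ exponentially as $r\to\infty$. The given $x,y$ are the values of the auxiliary gauge fields for this embedded ($Z_{NO}$) vortex with vanishing electromagnetic potential; $u,v$ are the radial and azimuthal profiles of a $W$ field $\propto[u\,\mathbf e_r+iv\,\mathbf e_\varphi]e^{im\varphi}$ in the gauge where the Higgs doublet has vanishing upper component. $\beta=(M_H/M_Z)^2$, $\gamma=\cos^2\theta_{\rm w}$. *)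

(* Defs.v *)
From Stdlib Require Import Reals.
From Coquelicot Require Import Coquelicot.
Open Scope R_scope.

Definition C2_pos (f : R -> R) : Prop :=
  forall r, 0 < r -> ex_derive f r /\ ex_derive (Derive f) r.

Definition C1_pos (f : R -> R) : Prop :=
  forall r, 0 < r -> ex_derive f r.

Definition asym0_pow (f : R -> R) (c k : R) : Prop :=
  exists eps : R -> R,
    filterlim eps (at_right 0) (locally 0) /\
    at_right 0 (fun r => f r = c * Rpower r k * (1 + eps r)).

Definition asym0_nat (f : R -> R) (c : R) (n : nat) : Prop :=
  exists eps : R -> R,
    filterlim eps (at_right 0) (locally 0) /\
    at_right 0 (fun r => f r = c * r ^ n * (1 + eps r)).

Definition exp_to (f : R -> R) (L : R) : Prop :=
  exists C a R0 : R, 0 < a /\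
    forall r, R0 <= r -> Rabs (f r - L) <= C * exp (- a * r).

Definition NO_profile (n : nat) (beta : R) (s z : R -> R) : Prop :=
  C2_pos s /\ C2_pos z /\
  (forall r, 0 < r ->
     Derive (Derive s) r + Derive s r / r
     - (z r ^ 2 + beta / 2 * (s r ^ 2 - 1)) * s r = 0) /\
  (forall r, 0 < r ->
     Derive (Derive z) r + Derive z r / r - z r / r ^ 2 - z r * s r ^ 2 = 0) /\
  (exists s0, asym0_nat s s0 n) /\
  (exists z0 : R, exists eps : R -> R,
     filterlim eps (at_right 0) (locally 0) /\
     at_right 0 (fun r => z r = INR n / r + z0 * r + eps r * r)) /\
  exp_to s 1 /\ exp_to z 0.

Definition aux_x (gamma : R) (n : nat) (m : Z) (z : R -> R) (r : R) : R :=
  (gamma - 1) * z r - (2 * gamma * INR n + IZR m) / (2 * r).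
Definition aux_y (gamma : R) (n : nat) (m : Z) (z : R -> R) (r : R) : R :=
  gamma * z r - (2 * gamma * INR n + IZR m) / (2 * r).

(* The W-field equations; c = 1 : full nonlinear equations,
   c = 0 : equations linearized in (u,v) (cubic terms dropped). *)
Definition W_eqs (c gamma : R) (y s u v : R -> R) : Prop :=
  forall r, 0 < r ->
    Derive (Derive v) r + Derive v r / r - v r / r ^ 2
      + 2 * (2 * Derive y r * u r + y r * Derive u r + / r * y r * u r)
      - c * (4 * v r * u r ^ 2) - gamma * v r * s r ^ 2 = 0 /\
    Derive v r * y r - v r * Derive y r
      + (2 * y r ^ 2 + gamma / 2 * s r ^ 2 + c * (2 * v r ^ 2)) * u r = 0.

Definition decays_W (gamma : R) (f : R -> R) : Prop :=
  exists C p R0 : R, 0 < R0 /\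
    forall r, R0 <= r -> Rabs (f r) <= C * Rpower r p * exp (- sqrt gamma * r).

(* Main.v *)
Require Import Defs.
From Stdlib Require Import Reals Lra Lia Psatz ZArith.
From Coquelicot Require Import Coquelicot.
Open Scope R_scope.


Ltac eta_fix := repeat match goal with |- context [fun x : R => ?f x] => change (fun x : R => f x) with f end.

Lemma cont_of_is_derive (f : R -> R) (x l : R) : is_derive f x l -> continuity_pt f x.
Proof.
  intros H. apply continuity_pt_filterlim.
  apply (ex_derive_continuous f x). exists l. exact H.
Qed.

Lemma mvt_le (f df : R -> R) (a b : R) : a <= b ->
  (forall t, a <= t <= b -> is_derive f t (df t)) ->
  exists c, a <= c <= b /\ f b - f a = df c * (b - a).
Proof.
  intros Hab Hd.
  destruct (MVT_gen f a b df) as [c [Hc Heq]].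
  - intros t Ht. apply Hd. rewrite Rmin_left, Rmax_right in Ht by lra. lra.
  - intros t Ht. rewrite Rmin_left, Rmax_right in Ht by lra.
    apply (cont_of_is_derive f t (df t)). apply Hd; lra.
  - rewrite Rmin_left, Rmax_right in Hc by lra. exists c. split; auto.
Qed.

Lemma mono_le (f df : R -> R) (a b : R) : a <= b ->
  (forall t, a <= t <= b -> is_derive f t (df t)) ->
  (forall t, a <= t <= b -> 0 <= df t) -> f a <= f b.
Proof.
  intros Hab Hd Hp. destruct (mvt_le f df a b Hab Hd) as [c [Hc Heq]].
  assert (0 <= df c * (b - a)) by (apply Rmult_le_pos; [apply Hp; lra | lra]).
  lra.
Qed.

Lemma mono_ge (f df : R -> R) (a b : R) : a <= b ->
  (forall t, a <= t <= b -> is_derive f t (df t)) ->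
  (forall t, a <= t <= b -> df t <= 0) -> f b <= f a.
Proof.
  intros Hab Hd Hp. destruct (mvt_le f df a b Hab Hd) as [c [Hc Heq]].
  assert (df c * (b - a) <= 0).
  { assert (0 <= - df c * (b - a)) by (apply Rmult_le_pos; [assert (df c <= 0) by (apply Hp; lra); lra | lra]). lra. }
  lra.
Qed.


Lemma is_derive_expc c t : is_derive (fun t => exp (c * t)) t (c * exp (c * t)).
Proof. auto_derive; [auto | ring]. Qed.

Lemma is_derive_mul_expc (E : R -> R) (dE c t : R) : is_derive E t (dE) ->
  is_derive (fun t => E t * exp (c * t)) t ((dE + c * E t) * exp (c * t)).
Proof.
  intros H. eapply is_derive_ext. { intros; reflexivity. }
  replace ((dE + c * E t) * exp (c * t)) with (dE * exp (c * t) + E t * (c * exp (c * t))) by ring.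
  apply (is_derive_mult E (fun t => exp (c * t))); [exact H | apply is_derive_expc | intros; apply Rmult_comm].
Qed.

Lemma Rabs_le_inv a b : Rabs a <= b -> - b <= a <= b.
Proof. unfold Rabs; destruct (Rcase_abs a); lra. Qed.

Lemma gronwall (E dE : R -> R) (L p q t0 : R) :
  p <= t0 <= q ->
  (forall t, p <= t <= q -> is_derive E t (dE t)) ->
  (forall t, p <= t <= q -> 0 <= E t) ->
  (forall t, p <= t <= q -> Rabs (dE t) <= L * E t) ->
  E t0 = 0 -> forall t, p <= t <= q -> E t = 0.
Proof.
  intros Ht0 Hd Hpos Hb H0 t Ht.
  assert (HE : 0 <= E t) by (apply Hpos; lra).
  destruct (Rle_dec t0 t) as [Hle|Hlt].
  - assert (Hg : E t * exp (- L * t) <= E t0 * exp (- L * t0)).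
    { apply (mono_ge (fun t => E t * exp (- L * t)) (fun t => (dE t + - L * E t) * exp (- L * t))).
      - lra.
      - intros w Hw. apply is_derive_mul_expc. apply Hd; lra.
      - intros w Hw. assert (Hx := Rabs_le_inv _ _ (Hb w ltac:(lra))).
        assert (0 < exp (- L * w)) by apply exp_pos.
        assert (0 <= (L * E w - dE w) * exp (- L * w)) by (apply Rmult_le_pos; lra). nra. }
    rewrite H0, Rmult_0_l in Hg.
    assert (0 < exp (- L * t)) by apply exp_pos.
    destruct (Req_dec (E t) 0); auto. nra.
  - assert (Hg : E t * exp (L * t) <= E t0 * exp (L * t0)).
    { apply (mono_le (fun t => E t * exp (L * t)) (fun t => (dE t + L * E t) * exp (L * t))).
      - lra.
      - intros w Hw. apply is_derive_mul_expc. apply Hd; lra.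
      - intros w Hw. assert (Hx := Rabs_le_inv _ _ (Hb w ltac:(lra))).
        assert (0 < exp (L * w)) by apply exp_pos.
        apply Rmult_le_pos; lra. }
    rewrite H0, Rmult_0_l in Hg.
    assert (0 < exp (L * t)) by apply exp_pos.
    destruct (Req_dec (E t) 0); auto. nra.
Qed.

Lemma deriv0_at_max (f : R -> R) (l a b c : R) : a < c < b -> is_derive f c l ->
  (forall x, a < x < b -> f x <= f c) -> l = 0.
Proof.
  intros Hc Hd Hm. apply is_derive_Reals in Hd.
  set (pr := exist _ l Hd : derivable_pt f c).
  rewrite <- (derive_pt_eq_0 f c l pr Hd).
  apply (deriv_maximum f a b c pr); try lra. intros; apply Hm; lra.
Qed.

Lemma deriv0_at_min (f : R -> R) (l a b c : R) : a < c < b -> is_derive f c l ->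
  (forall x, a < x < b -> f c <= f x) -> l = 0.
Proof.
  intros Hc Hd Hm. apply is_derive_Reals in Hd.
  set (pr := exist _ l Hd : derivable_pt f c).
  rewrite <- (derive_pt_eq_0 f c l pr Hd).
  apply (deriv_minimum f a b c pr); try lra. intros; apply Hm; lra.
Qed.

Lemma second_deriv_max (f f1 : R -> R) (l2 a b c : R) : a < c < b ->
  (forall t, a < t < b -> is_derive f t (f1 t)) ->
  is_derive f1 c l2 ->
  (forall x, a < x < b -> f x <= f c) -> l2 <= 0.
Proof.
  intros Hc Hd Hd2 Hm.
  assert (H1 : f1 c = 0) by (apply (deriv0_at_max f (f1 c) a b c); auto).
  destruct (Rle_dec l2 0) as [|Hpos]; auto. exfalso.
  apply is_derive_Reals in Hd2.
  destruct (Hd2 (l2/2) ltac:(lra)) as [del Hdel].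
  set (h0 := Rmin del (b - c) / 2).
  assert (Hh0 : 0 < h0 /\ h0 < del /\ c + h0 < b).
  { unfold h0. assert (0 < del) by apply (cond_pos del).
    assert (Rmin del (b - c) <= del) by apply Rmin_l.
    assert (Rmin del (b - c) <= b - c) by apply Rmin_r.
    assert (0 < Rmin del (b - c)) by (apply Rmin_glb_lt; lra). lra. }
  assert (Hpos1 : forall h, 0 < h <= h0 -> 0 < f1 (c + h)).
  { intros h Hh. assert (Hx := Hdel h ltac:(lra) ltac:(rewrite Rabs_pos_eq; lra)).
    rewrite H1 in Hx. apply Rabs_le_inv in Hx || (unfold Rabs in Hx; destruct (Rcase_abs _) in Hx).
    all: try (assert (0 < (f1 (c + h) - 0) / h) by lra;
              unfold Rdiv in *; assert (0 < / h) by (apply Rinv_0_lt_compat; lra); nra). }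
  destruct (mvt_le f f1 c (c + h0/2)) as [x1 [Hx1 E1]]; [lra | intros; apply Hd; lra |].
  destruct (mvt_le f f1 (c + h0/2) (c + h0)) as [x2 [Hx2 E2]]; [lra | intros; apply Hd; lra |].
  assert (0 <= f1 x1).
  { destruct (Req_dec x1 c) as [->|Hne]; [lra|].
    replace x1 with (c + (x1 - c)) by ring. left; apply Hpos1; lra. }
  assert (0 < f1 x2) by (replace x2 with (c + (x2 - c)) by ring; apply Hpos1; lra).
  assert (f (c + h0) <= f c) by (apply Hm; lra).
  nra.
Qed.

Lemma max_principle (f f1 f2 : R -> R) (al be : R) :
  0 < al < be ->
  (forall t, al <= t <= be -> is_derive f t (f1 t)) ->
  (forall t, al <= t <= be -> is_derive f1 t (f2 t)) ->
  f al < 0 -> f be < 0 ->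
  (forall t, al < t < be -> 0 < f t -> 0 <= f2 t - f1 t / t) ->
  forall t, al <= t <= be -> f t <= 0.
Proof.
  intros Hab Hd1 Hd2 Ha Hb Hsub t1 Ht1.
  destruct (Rle_dec (f t1) 0) as [|Hp]; auto. exfalso.
  assert (Hb4 : 0 < be ^ 4) by (apply pow_lt; lra).
  set (eps := f t1 / (2 * (be ^ 4 + 1))).
  assert (Heps : 0 < eps) by (unfold eps; apply Rdiv_lt_0_compat; lra).
  set (g := fun t => f t + eps * (t ^ 4 - be ^ 4)).
  set (g1 := fun t => f1 t + eps * (4 * t ^ 3)).
  set (g2 := fun t => f2 t + eps * (12 * t ^ 2)).
  assert (Hg1 : forall t, al <= t <= be -> is_derive g t (g1 t)).
  { intros t Ht. unfold g, g1. apply (is_derive_plus f (fun t => eps * (t ^ 4 - be ^ 4))).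
    - apply Hd1; auto.
    - auto_derive; [auto | simpl; ring]. }
  assert (Hg2 : forall t, al <= t <= be -> is_derive g1 t (g2 t)).
  { intros t Ht. unfold g1, g2. apply (is_derive_plus f1 (fun t => eps * (4 * t ^ 3))).
    - apply Hd2; auto.
    - auto_derive; [auto | simpl; ring]. }
  destruct (continuity_ab_maj g al be ltac:(lra)) as [c [Hmax Hc]].
  { intros t Ht. apply (cont_of_is_derive g t (g1 t)). apply Hg1; auto. }
  assert (Ht14 : t1 ^ 4 <= be ^ 4) by (apply pow_incr; lra).
  assert (Hgt1 : 0 < g t1).
  { unfold g. assert (eps * (be ^ 4 - t1 ^ 4) <= eps * (be ^ 4 + 1)).
    { apply Rmult_le_compat_l; [lra|]. assert (0 <= t1 ^ 4) by (apply pow_le; lra). lra. }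
    assert (eps * (be ^ 4 + 1) = f t1 / 2) by (unfold eps; field; lra). nra. }
  assert (Hgc : 0 < g c) by (specialize (Hmax t1 Ht1); lra).
  assert (Hga : g al < 0).
  { unfold g. assert (al ^ 4 <= be ^ 4) by (apply pow_incr; lra). nra. }
  assert (Hgb : g be < 0) by (unfold g; replace (be ^ 4 - be ^ 4) with 0 by ring; lra).
  assert (Hc' : al < c < be).
  { split; destruct (Req_dec c al) as [->|]; try lra; destruct (Req_dec c be) as [->|]; lra. }
  assert (Hfc : 0 < f c).
  { unfold g in Hgc. assert (c ^ 4 <= be ^ 4) by (apply pow_incr; lra). nra. }
  assert (Hg1c : g1 c = 0).
  { apply (deriv0_at_max g (g1 c) al be c Hc'); [apply Hg1; lra | intros; apply Hmax; lra]. }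
  assert (Hg2c : g2 c <= 0).
  { apply (second_deriv_max g g1 (g2 c) al be c Hc').
    - intros; apply Hg1; lra.
    - apply Hg2; lra.
    - intros; apply Hmax; lra. }
  specialize (Hsub c Hc' Hfc).
  unfold g1, g2 in *.
  assert (Hc2 : 0 < c ^ 2) by (apply pow_lt; lra).
  assert (f1 c = - eps * 4 * c ^ 3) by lra.
  assert (f2 c - f1 c / c = f2 c + eps * 4 * c ^ 2).
  { rewrite H. field. lra. }
  nra.
Qed.

Lemma isd_affine (f : R -> R) t l A B : is_derive f t l -> is_derive (fun t => A * f t + B) t (A * l).
Proof.
  intros H. assert (H1 := is_derive_scal f t A l H).
  assert (H2 := is_derive_plus _ (fun _ => B) t _ 0 H1 (is_derive_const B t)).
  replace (A * l) with (plus (A * l) (zero : R)) by (unfold plus, zero; simpl; ring).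
  exact H2.
Qed.

Lemma isd_affine' (f g : R -> R) t l A B L : (forall x, g x = A * f x + B) -> L = A * l ->
  is_derive f t l -> is_derive g t L.
Proof.
  intros Hg HL H. subst L. apply (is_derive_ext (fun t => A * f t + B)); [intros; rewrite Hg; reflexivity|].
  apply isd_affine; auto.
Qed.


Lemma isd_mult (f g : R -> R) (t df dg : R) : is_derive f t df -> is_derive g t dg ->
  is_derive (fun t => f t * g t) t (df * g t + f t * dg).
Proof.
  intros H1 H2. apply is_derive_Reals. apply is_derive_Reals in H1. apply is_derive_Reals in H2.
  apply (derivable_pt_lim_mult f g t df dg H1 H2).
Qed.

Lemma isd_plus (f g : R -> R) (t df dg : R) : is_derive f t df -> is_derive g t dg ->
  is_derive (fun t => f t + g t) t (df + dg).
Proof.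
  intros H1 H2. apply is_derive_Reals. apply is_derive_Reals in H1. apply is_derive_Reals in H2.
  apply (derivable_pt_lim_plus f g t df dg H1 H2).
Qed.

Lemma isd_minus (f g : R -> R) (t df dg : R) : is_derive f t df -> is_derive g t dg ->
  is_derive (fun t => f t - g t) t (df - dg).
Proof.
  intros H1 H2. apply is_derive_Reals. apply is_derive_Reals in H1. apply is_derive_Reals in H2.
  apply (derivable_pt_lim_minus f g t df dg H1 H2).
Qed.

Lemma isd_ext (f g : R -> R) (t l l' : R) : (forall x, f x = g x) -> l = l' -> is_derive f t l -> is_derive g t l'.
Proof. intros H -> H1. apply (is_derive_ext f g); auto. Qed.

Lemma isd_ext_loc (f g : R -> R) (t l l' d : R) : 0 < d -> (forall x, Rabs (x - t) < d -> f x = g x) -> l = l' ->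
  is_derive f t l -> is_derive g t l'.
Proof.
  intros Hd H -> H1. apply (is_derive_ext_loc f g); auto.
  exists (mkposreal d Hd). intros y Hy. apply H. exact Hy.
Qed.

Lemma isd_unique (f : R -> R) (t l l' : R) : is_derive f t l -> is_derive f t l' -> l = l'.
Proof.
  intros H1 H2. apply is_derive_unique in H1. apply is_derive_unique in H2. congruence.
Qed.

Lemma ex_isd (f : R -> R) t : ex_derive f t -> is_derive f t (Derive f t).
Proof. intros H. apply Derive_correct; auto. Qed.
Lemma bound_compact (f : R -> R) p q : p <= q ->
  (forall t, p <= t <= q -> continuity_pt f t) -> exists M, forall t, p <= t <= q -> f t <= M.
Proof.
  intros Hpq Hc. destruct (continuity_ab_maj f p q Hpq Hc) as [x [Hx _]]. exists (f x); auto.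
Qed.

Lemma ode2_unique (f f1 f2 : R -> R) p q t0 KA KB :
  p <= t0 <= q -> 0 <= KA -> 0 <= KB ->
  (forall t, p <= t <= q -> is_derive f t (f1 t)) ->
  (forall t, p <= t <= q -> is_derive f1 t (f2 t)) ->
  (forall t, p <= t <= q -> Rabs (f2 t) <= KA * Rabs (f1 t) + KB * Rabs (f t)) ->
  f t0 = 0 -> f1 t0 = 0 -> forall t, p <= t <= q -> f t = 0.
Proof.
  intros Ht0 HKA HKB Hd1 Hd2 Hb H0 H1 t Ht.
  assert (HE := gronwall (fun t => f t ^ 2 + f1 t ^ 2) (fun t => 2 * f t * f1 t + 2 * f1 t * f2 t)
    (1 + 2 * KA + KB) p q t0 Ht0).
  assert (Hz : f t ^ 2 + f1 t ^ 2 = 0).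
  { apply HE; auto.
    - intros w Hw. specialize (Hd1 w Hw). specialize (Hd2 w Hw).
      apply (isd_ext (fun t => f t * f t + f1 t * f1 t) _ w (f1 w * f w + f w * f1 w + (f2 w * f1 w + f1 w * f2 w)));
        [intros; simpl; ring | simpl; ring |].
      apply isd_plus; apply isd_mult; auto.
    - intros w Hw. cbv beta. assert (0 <= f w ^ 2) by apply pow2_ge_0. assert (0 <= f1 w ^ 2) by apply pow2_ge_0. lra.
    - intros w Hw. specialize (Hb w Hw). cbv beta.
      set (a := f w) in *. set (b := f1 w) in *. set (c := f2 w) in *.
      assert (Hab : Rabs (2 * a * b) <= a ^ 2 + b ^ 2).
      { assert (0 <= (a + b) ^ 2) by apply pow2_ge_0. assert (0 <= (a - b) ^ 2) by apply pow2_ge_0.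
        apply Rabs_le. split; nra. }
      assert (Hbc : Rabs (2 * b * c) <= 2 * Rabs b * (KA * Rabs b + KB * Rabs a)).
      { rewrite !Rabs_mult. rewrite (Rabs_pos_eq 2) by lra.
        apply Rmult_le_compat_l; [assert (0 <= Rabs b) by apply Rabs_pos; lra | auto]. }
      assert (Hab2 : 2 * Rabs b * Rabs a <= a ^ 2 + b ^ 2).
      { assert (Rabs a ^ 2 = a ^ 2) by (rewrite RPow_abs, Rabs_pos_eq; [auto | apply pow2_ge_0]).
        assert (Rabs b ^ 2 = b ^ 2) by (rewrite RPow_abs, Rabs_pos_eq; [auto | apply pow2_ge_0]).
        assert (0 <= (Rabs a - Rabs b) ^ 2) by apply pow2_ge_0. nra. }
      assert (Rabs b ^ 2 = b ^ 2) by (rewrite RPow_abs, Rabs_pos_eq; [auto | apply pow2_ge_0]).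
      eapply Rle_trans; [apply Rabs_triang|].
      assert (0 <= a ^ 2) by apply pow2_ge_0.
      nra.
    - cbv beta; rewrite H0, H1; simpl; lra. }
  assert (0 <= f t ^ 2) by apply pow2_ge_0. assert (0 <= f1 t ^ 2) by apply pow2_ge_0.
  assert (Hf0 : f t ^ 2 = 0) by (cbv beta in Hz; lra).
  destruct (Req_dec (f t) 0) as [|Hne]; auto. exfalso.
  assert (0 < f t * f t) by (destruct (Rlt_dec 0 (f t)); [nra | assert (f t < 0) by lra; nra]).
  simpl in Hf0. lra.
Qed.

Lemma cont_of_ex_derive (f : R -> R) t : ex_derive f t -> continuity_pt f t.
Proof. intros [l H]. apply (cont_of_is_derive f t l H). Qed.

Lemma Rabs_le_sq1 x : Rabs x <= x ^ 2 + 1.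
Proof. unfold Rabs; destruct (Rcase_abs x); nra. Qed.

Lemma isd_const (c t : R) : is_derive (fun _ : R => c) t 0.
Proof. auto_derive; auto. Qed.

Ltac side := repeat split; auto; try (apply Rgt_not_eq; simpl; nra); try (apply Rgt_not_eq; simpl; lra); try lra.

Ltac rmax := repeat (first [apply Rle_refl | apply Rmax_l | eapply Rle_trans; [|apply Rmax_r]]).


Lemma at_right0_ex (P : R -> Prop) : at_right 0 P -> exists d, 0 < d /\ forall r, 0 < r < d -> P r.
Proof.
  intros [e He]. exists e. split; [apply cond_pos|].
  intros r Hr. apply He; [|lra].
  change (Rabs (r - 0) < e). rewrite Rminus_0_r, Rabs_pos_eq; lra.
Qed.

Lemma lim0_ex (f : R -> R) : filterlim f (at_right 0) (locally 0) ->
  forall e, 0 < e -> exists d, 0 < d /\ forall r, 0 < r < d -> Rabs (f r) < e.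
Proof.
  intros H e He. 
  assert (H2 := H (fun y => Rabs y < e)).
  destruct (at_right0_ex _ (H2 ltac:(exists (mkposreal e He); intros y Hy; 
     change (Rabs (y - 0) < e) in Hy; rewrite Rminus_0_r in Hy; exact Hy))) as [d [Hd Hd']].
  exists d; split; auto.
Qed.

Lemma ln_le_xm1 x : 0 < x -> ln x <= x - 1.
Proof. intros Hx. assert (H := exp_ineq1_le (ln x)). rewrite exp_ln in H; lra. Qed.

Lemma Rpower_pos x y : 0 < Rpower x y.
Proof. unfold Rpower; apply exp_pos. Qed.

Lemma Rpower_to0 al : 0 < al -> forall e, 0 < e -> exists d, 0 < d /\ forall r, 0 < r < d -> Rpower r al < e.
Proof.
  intros Hal e He. exists (Rpower e (/ al)). split; [apply Rpower_pos|].
  intros r Hr. apply Rlt_le_trans with (Rpower (Rpower e (/ al)) al).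
  - apply Rlt_Rpower_l; lra.
  - rewrite Rpower_mult. rewrite Rinv_l by lra. rewrite Rpower_1 by lra. lra.
Qed.

Lemma Rpower_exp_toinf q al : 0 < al -> forall e, 0 < e ->
  exists R0, forall r, R0 <= r -> Rpower r q * exp (- al * r) < e.
Proof.
  intros Hal e He.
  set (A := 4 * (Rabs q + 1) / al).
  exists (Rmax 1 (Rmax (A * A) (- 2 * ln e / al + 1))).
  intros r Hr.
  assert (H1 : 1 <= r) by (eapply Rle_trans; [apply Rmax_l | exact Hr]).
  assert (H2 : A * A <= r) by (eapply Rle_trans; [eapply Rle_trans; [apply Rmax_l | apply Rmax_r] | exact Hr]).
  assert (H3 : - 2 * ln e / al + 1 <= r) by (eapply Rle_trans; [eapply Rle_trans; [apply Rmax_r | apply Rmax_r] | exact Hr]).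
  unfold Rpower. rewrite <- exp_plus.
  assert (Hsq : 0 < sqrt r) by (apply sqrt_lt_R0; lra).
  assert (Hsr : sqrt r * sqrt r = r) by (apply sqrt_sqrt; lra).
  assert (Hln : ln r <= 2 * sqrt r).
  { replace (ln r) with (2 * ln (sqrt r)).
    - assert (ln (sqrt r) <= sqrt r - 1) by (apply ln_le_xm1; lra). lra.
    - rewrite <- Hsr at 2. rewrite ln_mult by lra. ring. }
  assert (Hln0 : 0 <= ln r) by (rewrite <- ln_1; apply ln_le; lra).
  assert (HA : 0 < A) by (unfold A; apply Rdiv_lt_0_compat; [assert (0 <= Rabs q) by apply Rabs_pos; lra | lra]).
  assert (HAs : A <= sqrt r).
  { apply Rsqr_incr_0_var; [unfold Rsqr; rewrite Hsr; lra | lra]. }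
  assert (Hq : q * ln r <= Rabs q * (2 * sqrt r)).
  { apply Rle_trans with (Rabs q * ln r).
    - apply Rmult_le_compat_r; [lra | apply Rle_abs].
    - apply Rmult_le_compat_l; [apply Rabs_pos | lra]. }
  assert (Hq2 : Rabs q * (2 * sqrt r) <= al * r / 2).
  { unfold A in HAs.
    assert (4 * (Rabs q + 1) <= al * sqrt r).
    { apply (Rmult_le_compat_l al) in HAs; [|lra].
      replace (al * (4 * (Rabs q + 1) / al)) with (4 * (Rabs q + 1)) in HAs by (field; apply Rgt_not_eq; lra). lra. }
    assert (0 <= Rabs q) by apply Rabs_pos.
    assert (al * r = (al * sqrt r) * sqrt r) by (rewrite <- Hsr at 1; ring).
    assert (4 * (Rabs q + 1) * sqrt r <= (al * sqrt r) * sqrt r) by (apply Rmult_le_compat_r; lra).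
    nra. }
  apply Rlt_le_trans with (exp (ln e)); [|rewrite exp_ln; lra].
  apply exp_increasing.
  assert (al * r > - 2 * ln e).
  { apply (Rmult_le_compat_l al) in H3; [|lra].
    replace (al * (- 2 * ln e / al + 1)) with (- 2 * ln e + al) in H3 by (field; apply Rgt_not_eq; lra). lra. }
  lra.
Qed.


Definition az (z : R -> R) t := t * z t.
Definition az1 (z : R -> R) t := z t + t * Derive z t.
Definition az2 (z : R -> R) t := 2 * Derive z t + t * Derive (Derive z) t.

Lemma az_der (z : R -> R) (t : R) : C2_pos z -> 0 < t -> is_derive (az z) t (az1 z t).
Proof.
  intros Hz Ht. destruct (Hz t Ht) as [H1 H2]. unfold az, az1.
  auto_derive; eta_fix; [auto | ring].
Qed.

Lemma az1_der (z : R -> R) (t : R) : C2_pos z -> 0 < t -> is_derive (az1 z) t (az2 z t).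
Proof.
  intros Hz Ht. destruct (Hz t Ht) as [H1 H2]. unfold az1, az2.
  auto_derive; eta_fix; [auto | ring].
Qed.

Lemma az_ode n beta s z t : NO_profile n beta s z -> 0 < t ->
  az2 z t - az1 z t / t = az z t * s t ^ 2.
Proof.
  intros [_ [_ [_ [Hz _]]]] Ht. specialize (Hz t Ht). unfold az, az1, az2.
  apply Rmult_eq_reg_l with (/ t); [| apply Rinv_neq_0_compat; lra].
  replace (/ t * (2 * Derive z t + t * Derive (Derive z) t - (z t + t * Derive z t) / t))
    with (Derive (Derive z) t + Derive z t / t - z t / t ^ 2) by (field; lra).
  replace (/ t * (t * z t * s t ^ 2)) with (z t * s t ^ 2) by (field; lra). lra.
Qed.

Lemma exp_to_small f L : exp_to f L -> forall e, 0 < e ->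
  exists R0, 0 < R0 /\ forall r, R0 <= r -> Rabs (f r - L) < e.
Proof.
  intros [C [a [R1 [Ha Hb]]]] e He.
  destruct (Rpower_exp_toinf 0 a Ha (e / (Rabs C + 1))) as [R2 HR2].
  { apply Rdiv_lt_0_compat; [lra | assert (0 <= Rabs C) by apply Rabs_pos; lra]. }
  exists (Rmax 1 (Rmax R1 R2)). split; [apply Rlt_le_trans with 1; [lra | apply Rmax_l]|].
  intros r Hr.
  assert (H1 : 1 <= r) by (eapply Rle_trans; [apply Rmax_l | exact Hr]).
  assert (H2 : R1 <= r) by (eapply Rle_trans; [eapply Rle_trans; [apply Rmax_l | apply Rmax_r] | exact Hr]).
  assert (H3 : R2 <= r) by (eapply Rle_trans; [eapply Rle_trans; [apply Rmax_r | apply Rmax_r] | exact Hr]).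
  specialize (HR2 r H3). rewrite Rpower_O in HR2 by lra. rewrite Rmult_1_l in HR2.
  eapply Rle_lt_trans; [apply Hb; auto|].
  assert (0 < exp (- a * r)) by apply exp_pos.
  assert (C <= Rabs C) by apply Rle_abs.
  assert (0 <= Rabs C) by apply Rabs_pos.
  apply Rle_lt_trans with ((Rabs C + 1) * exp (- a * r)); [nra|].
  apply Rmult_lt_reg_l with (/ (Rabs C + 1)); [apply Rinv_0_lt_compat; lra|].
  rewrite <- Rmult_assoc, Rinv_l by lra. unfold Rdiv in HR2. lra.
Qed.

Lemma az_inf z : exp_to z 0 -> forall e, 0 < e ->
  exists R0, 0 < R0 /\ forall r, R0 <= r -> Rabs (az z r) < e.
Proof.
  intros [C [a [R1 [Ha Hb]]]] e He.
  destruct (Rpower_exp_toinf 1 a Ha (e / (Rabs C + 1))) as [R2 HR2].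
  { apply Rdiv_lt_0_compat; [lra | assert (0 <= Rabs C) by apply Rabs_pos; lra]. }
  exists (Rmax 1 (Rmax R1 R2)). split; [apply Rlt_le_trans with 1; [lra | apply Rmax_l]|].
  intros r Hr.
  assert (H1 : 1 <= r) by (eapply Rle_trans; [apply Rmax_l | exact Hr]).
  assert (H2 : R1 <= r) by (eapply Rle_trans; [eapply Rle_trans; [apply Rmax_l | apply Rmax_r] | exact Hr]).
  assert (H3 : R2 <= r) by (eapply Rle_trans; [eapply Rle_trans; [apply Rmax_r | apply Rmax_r] | exact Hr]).
  specialize (HR2 r H3). rewrite Rpower_1 in HR2 by lra.
  specialize (Hb r H2). rewrite Rminus_0_r in Hb.
  unfold az. rewrite Rabs_mult, (Rabs_pos_eq r) by lra.
  assert (0 < exp (- a * r)) by apply exp_pos.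
  assert (C <= Rabs C) by apply Rle_abs.
  assert (0 <= Rabs C) by apply Rabs_pos.
  apply Rle_lt_trans with (r * ((Rabs C + 1) * exp (- a * r))).
  { apply Rmult_le_compat_l; [lra|]. nra. }
  replace (r * ((Rabs C + 1) * exp (- a * r))) with ((Rabs C + 1) * (r * exp (- a * r))) by ring.
  apply Rmult_lt_reg_l with (/ (Rabs C + 1)); [apply Rinv_0_lt_compat; lra|].
  rewrite <- Rmult_assoc, Rinv_l by lra. unfold Rdiv in HR2. lra.
Qed.

Lemma az_zero n beta s z : NO_profile n beta s z ->
  exists C d, 0 < d /\ forall r, 0 < r < d -> Rabs (az z r - INR n) <= C * r ^ 2.
Proof.
  intros [_ [_ [_ [_ [_ [[z0 [eps [Heps Hev]]] _]]]]]].
  destruct (at_right0_ex _ Hev) as [d1 [Hd1 H1]].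
  destruct (lim0_ex _ Heps 1 ltac:(lra)) as [d2 [Hd2 H2]].
  exists (Rabs z0 + 1), (Rmin d1 d2). split; [apply Rmin_glb_lt; auto|].
  intros r Hr.
  assert (r < d1) by (eapply Rlt_le_trans; [apply Hr | apply Rmin_l]).
  assert (r < d2) by (eapply Rlt_le_trans; [apply Hr | apply Rmin_r]).
  specialize (H1 r ltac:(lra)). specialize (H2 r ltac:(lra)).
  unfold az. rewrite H1.
  replace (r * (INR n / r + z0 * r + eps r * r) - INR n) with ((z0 + eps r) * r ^ 2) by (field; apply Rgt_not_eq; lra).
  rewrite Rabs_mult, (Rabs_pos_eq (r ^ 2)) by (apply pow_le; lra).
  apply Rmult_le_compat_r; [apply pow_le; lra|].
  eapply Rle_trans; [apply Rabs_triang|]. lra.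
Qed.

Lemma az_bounds n beta s z : (1 <= n)%nat -> NO_profile n beta s z ->
  forall t, 0 < t -> 0 <= az z t <= INR n.
Proof.
  intros Hn HNO.
  assert (HNO' := HNO). destruct HNO' as [_ [Hz [_ [_ [_ [_ [_ Hzinf]]]]]]].
  assert (Hn1 : 1 <= INR n) by (apply (le_INR 1); auto).
  destruct (az_zero _ _ _ _ HNO) as [C [d [Hd H0]]].
  assert (HC : 0 <= Rabs C) by apply Rabs_pos.
  assert (HCa : C <= Rabs C) by apply Rle_abs.
  assert (Hsmall : forall t1 del, 0 < t1 -> 0 < del -> exists al, 0 < al < t1 /\ Rabs (az z al - INR n) < del).
  { intros t1 del Ht1 Hdel.
    set (al := Rmin (t1 / 2) (Rmin (d / 2) (Rmin 1 (del / (2 * (Rabs C + 1)))))).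
    assert (Hal1 : 0 < al).
    { unfold al. repeat apply Rmin_glb_lt; try lra. apply Rdiv_lt_0_compat; lra. }
    assert (Hal2 : al <= t1 / 2) by apply Rmin_l.
    assert (Hal3 : al <= d / 2) by (eapply Rle_trans; [apply Rmin_r | apply Rmin_l]).
    assert (Hal4 : al <= 1) by (eapply Rle_trans; [apply Rmin_r | eapply Rle_trans; [apply Rmin_r | apply Rmin_l]]).
    assert (Hal5 : al <= del / (2 * (Rabs C + 1))) by (eapply Rle_trans; [apply Rmin_r | eapply Rle_trans; [apply Rmin_r | apply Rmin_r]]).
    exists al. split; [lra|].
    specialize (H0 al ltac:(lra)).
    apply Rle_lt_trans with (C * al ^ 2); auto.
    assert (C * al ^ 2 <= Rabs C * al ^ 2) by (apply Rmult_le_compat_r; [apply pow_le|]; lra).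
    assert (Rabs C * al ^ 2 <= Rabs C * al) by (apply Rmult_le_compat_l; [lra|]; simpl; nra).
    assert (al * (2 * (Rabs C + 1)) <= del).
    { apply Rmult_le_compat_r with (r := 2 * (Rabs C + 1)) in Hal5; [|lra].
      replace (del / (2 * (Rabs C + 1)) * (2 * (Rabs C + 1))) with del in Hal5 by (field; lra). lra. }
    nra. }
  intros t1 Ht1. split.
  - destruct (Rle_dec 0 (az z t1)) as [|Hneg]; auto. exfalso.
    apply Rnot_le_lt in Hneg. set (del := - az z t1).
    destruct (Hsmall t1 (INR n / 2) Ht1 ltac:(lra)) as [al [Hal Haal]].
    apply Rabs_def2 in Haal.
    destruct (az_inf z Hzinf (del / 2) ltac:(unfold del; lra)) as [R1 [HR1 HR1']].
    set (be := Rmax (t1 + 1) R1).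
    assert (Hbe : t1 < be /\ R1 <= be) by (unfold be; split; [eapply Rlt_le_trans; [|apply Rmax_l]; lra | apply Rmax_r]).
    assert (H' : - az z t1 - del / 2 <= 0).
    { apply (max_principle (fun t => - az z t - del / 2) (fun t => - az1 z t) (fun t => - az2 z t) al be).
      - cbv beta; unfold del in *; lra.
      - intros t Ht. apply (isd_affine' (az z) _ t (az1 z t) (-1) (- (del / 2))); [intros; ring | ring |].
        apply az_der; auto; lra.
      - intros t Ht. apply (isd_affine' (az1 z) _ t (az2 z t) (-1) 0); [intros; ring | ring |].
        apply az1_der; auto; lra.
      - cbv beta. unfold del in *. lra.
      - specialize (HR1' be ltac:(lra)). apply Rabs_def2 in HR1'. cbv beta; unfold del in *; lra.
      - intros t Ht Hpos. cbv beta in *.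
        replace (- az2 z t - - az1 z t / t) with (- (az2 z t - az1 z t / t)) by (field; lra).
        rewrite (az_ode n beta s z t HNO ltac:(lra)).
        assert (0 <= s t ^ 2) by (apply pow2_ge_0). unfold del in *. assert (az z t < 0) by lra. nra.
      - cbv beta; unfold del in *; lra. }
    unfold del in H'. lra.
  - destruct (Rle_dec (az z t1) (INR n)) as [|Hbig]; auto. exfalso.
    apply Rnot_le_lt in Hbig. set (del := az z t1 - INR n).
    destruct (Hsmall t1 (del / 2) Ht1 ltac:(unfold del; lra)) as [al [Hal Haal]].
    apply Rabs_def2 in Haal.
    destruct (az_inf z Hzinf 1 ltac:(lra)) as [R1 [HR1 HR1']].
    set (be := Rmax (t1 + 1) R1).
    assert (Hbe : t1 < be /\ R1 <= be) by (unfold be; split; [eapply Rlt_le_trans; [|apply Rmax_l]; lra | apply Rmax_r]).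
    assert (H' : az z t1 - INR n - del / 2 <= 0).
    { apply (max_principle (fun t => az z t - INR n - del / 2) (fun t => az1 z t) (fun t => az2 z t) al be).
      - cbv beta; unfold del in *; lra.
      - intros t Ht. apply (isd_affine' (az z) _ t (az1 z t) 1 (- INR n - (del / 2))); [intros; ring | ring |].
        apply az_der; auto; lra.
      - intros t Ht. apply az1_der; auto; lra.
      - cbv beta; unfold del in *; lra.
      - specialize (HR1' be ltac:(lra)). apply Rabs_def2 in HR1'. cbv beta; unfold del; lra.
      - intros t Ht Hpos. cbv beta in *.
        rewrite (az_ode n beta s z t HNO ltac:(lra)).
        assert (0 <= s t ^ 2) by (apply pow2_ge_0). nra.
      - cbv beta; unfold del in *; lra. }
    unfold del in H'. lra.
Qed.


Lemma s_nozero n beta s z : NO_profile n beta s z ->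
  forall p q, 0 < p < q -> (forall t, p < t < q -> s t = 0) -> False.
Proof.
  intros HNO p q Hpq Hs0.
  destruct HNO as [Hs [Hz [Hode [_ [_ [_ [Hsinf _]]]]]]].
  set (t0 := (p + q) / 2).
  assert (Hst0 : s t0 = 0) by (apply Hs0; unfold t0; lra).
  assert (Hds0 : Derive s t0 = 0).
  { apply (isd_unique s t0); [apply ex_isd; apply Hs; unfold t0; lra|].
    apply (isd_ext_loc (fun _ => 0) s t0 0 0 ((q - p) / 2)); [lra | | reflexivity | apply isd_const].
    intros x Hx. apply Rabs_def2 in Hx. symmetry; apply Hs0. unfold t0 in Hx; lra. }
  destruct (exp_to_small s 1 Hsinf (1/2) ltac:(lra)) as [R0 [HR0 HR0']].
  set (R := Rmax (t0 + 1) R0).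
  assert (HR : t0 + 1 <= R /\ R0 <= R) by (split; [apply Rmax_l | apply Rmax_r]).
  assert (Ht0 : 0 < t0) by (unfold t0; lra).
  set (V := fun t => z t ^ 2 + beta / 2 * (s t ^ 2 - 1)).
  destruct (bound_compact (fun t => V t ^ 2 + 1) t0 R ltac:(lra)) as [M HM].
  { intros t Ht. apply cont_of_ex_derive. destruct (Hs t ltac:(lra)). destruct (Hz t ltac:(lra)).
    unfold V. auto_derive. eta_fix. auto. }
  assert (HM0 : 0 <= M) by (specialize (HM t0 ltac:(lra)); cbv beta in HM; assert (0 <= V t0 ^ 2) by apply pow2_ge_0; lra).
  assert (Hall := ode2_unique s (Derive s) (Derive (Derive s)) t0 R t0 (/ t0) M ltac:(lra)
    ltac:(left; apply Rinv_0_lt_compat; lra) HM0).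
  assert (HsR : s R = 0).
  { apply Hall; try lra; auto.
    - intros t Ht. apply ex_isd. apply Hs; lra.
    - intros t Ht. apply ex_isd. apply Hs; lra.
    - intros t Ht. specialize (Hode t ltac:(lra)). specialize (HM t Ht). cbv beta in HM.
      replace (Derive (Derive s) t) with (- Derive s t / t + V t * s t) by (unfold V; lra).
      eapply Rle_trans; [apply Rabs_triang|].
      rewrite Rabs_mult.
      assert (Ha : Rabs (- Derive s t / t) = Rabs (Derive s t) * / t).
      { unfold Rdiv. rewrite Rabs_mult, Rabs_Ropp. rewrite (Rabs_pos_eq (/ t)) by (left; apply Rinv_0_lt_compat; lra). auto. }
      rewrite Ha.
      assert (/ t <= / t0) by (apply Rinv_le_contravar; lra).
      assert (Rabs (V t) <= M) by (eapply Rle_trans; [apply Rabs_le_sq1 | exact HM]).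
      assert (0 <= Rabs (Derive s t)) by apply Rabs_pos.
      assert (0 <= Rabs (s t)) by apply Rabs_pos.
      assert (0 <= Rabs (V t)) by apply Rabs_pos.
      nra. }
  specialize (HR0' R ltac:(lra)). rewrite HsR in HR0'. apply Rabs_def2 in HR0'. lra.
Qed.

Lemma s_inf n beta s z : NO_profile n beta s z ->
  exists R0, 0 < R0 /\ forall r, R0 <= r -> 1/2 <= s r <= 3/2.
Proof.
  intros [_ [_ [_ [_ [_ [_ [Hsinf _]]]]]]].
  destruct (exp_to_small s 1 Hsinf (1/2) ltac:(lra)) as [R0 [HR0 HR0']].
  exists R0. split; auto. intros r Hr. specialize (HR0' r Hr). apply Rabs_def2 in HR0'. lra.
Qed.

Lemma s_zero n beta s z : NO_profile n beta s z ->
  exists C d, 0 < d /\ forall r, 0 < r < d -> Rabs (s r) <= C * r ^ n.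
Proof.
  intros [_ [_ [_ [_ [[s0 [eps [Heps Hev]]] _]]]]].
  destruct (at_right0_ex _ Hev) as [d1 [Hd1 H1]].
  destruct (lim0_ex _ Heps 1 ltac:(lra)) as [d2 [Hd2 H2]].
  exists (2 * Rabs s0), (Rmin d1 d2). split; [apply Rmin_glb_lt; auto|].
  intros r Hr.
  assert (r < d1) by (eapply Rlt_le_trans; [apply Hr | apply Rmin_l]).
  assert (r < d2) by (eapply Rlt_le_trans; [apply Hr | apply Rmin_r]).
  specialize (H1 r ltac:(lra)). specialize (H2 r ltac:(lra)).
  rewrite H1. rewrite !Rabs_mult. rewrite (Rabs_pos_eq (r ^ n)) by (apply pow_le; lra).
  assert (Rabs (1 + eps r) <= 2) by (eapply Rle_trans; [apply Rabs_triang|]; rewrite Rabs_R1; lra).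
  assert (0 <= Rabs s0) by apply Rabs_pos. assert (0 <= r ^ n) by (apply pow_le; lra).
  assert (0 <= Rabs s0 * r ^ n) by (apply Rmult_le_pos; auto).
  nra.
Qed.

Lemma az_near0 n beta s z : NO_profile n beta s z ->
  forall t1 del, 0 < t1 -> 0 < del -> exists al, 0 < al < t1 /\ Rabs (az z al - INR n) < del.
Proof.
  intros HNO t1 del Ht1 Hdel.
  destruct (az_zero _ _ _ _ HNO) as [C [d [Hd H0]]].
  assert (HC : 0 <= Rabs C) by apply Rabs_pos.
  assert (HCa : C <= Rabs C) by apply Rle_abs.
  set (al := Rmin (t1 / 2) (Rmin (d / 2) (Rmin 1 (del / (2 * (Rabs C + 1)))))).
  assert (Hal1 : 0 < al).
  { unfold al. repeat apply Rmin_glb_lt; try lra. apply Rdiv_lt_0_compat; lra. }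
  assert (Hal2 : al <= t1 / 2) by apply Rmin_l.
  assert (Hal3 : al <= d / 2) by (eapply Rle_trans; [apply Rmin_r | apply Rmin_l]).
  assert (Hal4 : al <= 1) by (eapply Rle_trans; [apply Rmin_r | eapply Rle_trans; [apply Rmin_r | apply Rmin_l]]).
  assert (Hal5 : al <= del / (2 * (Rabs C + 1))) by (eapply Rle_trans; [apply Rmin_r | eapply Rle_trans; [apply Rmin_r | apply Rmin_r]]).
  exists al. split; [lra|].
  specialize (H0 al ltac:(lra)).
  apply Rle_lt_trans with (C * al ^ 2); auto.
  assert (C * al ^ 2 <= Rabs C * al ^ 2) by (apply Rmult_le_compat_r; [apply pow_le|]; lra).
  assert (Rabs C * al ^ 2 <= Rabs C * al) by (apply Rmult_le_compat_l; [lra|]; simpl; nra).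
  assert (al * (2 * (Rabs C + 1)) <= del).
  { apply Rmult_le_compat_r with (r := 2 * (Rabs C + 1)) in Hal5; [|lra].
    replace (del / (2 * (Rabs C + 1)) * (2 * (Rabs C + 1))) with del in Hal5 by (field; lra). lra. }
  nra.
Qed.

Lemma az_pos n beta s z : (1 <= n)%nat -> NO_profile n beta s z ->
  forall t, 0 < t -> 0 < az z t.
Proof.
  intros Hn HNO t1 Ht1.
  assert (Hn1 : 1 <= INR n) by (apply (le_INR 1); auto).
  assert (Hb := az_bounds n beta s z Hn HNO).
  destruct (Rlt_dec 0 (az z t1)) as [|Hnp]; auto. exfalso.
  assert (H0 : az z t1 = 0) by (specialize (Hb t1 Ht1); lra).
  assert (HNO' := HNO). destruct HNO' as [Hs [Hz _]].
  assert (H1 : az1 z t1 = 0).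
  { apply (deriv0_at_min (az z) (az1 z t1) (t1 / 2) (2 * t1) t1); [lra | apply az_der; auto |].
    intros x Hx. rewrite H0. apply Hb; lra. }
  destruct (az_near0 n beta s z HNO t1 (INR n / 2) Ht1 ltac:(lra)) as [al [Hal Haal]].
  apply Rabs_def2 in Haal.
  destruct (bound_compact (fun t => s t ^ 2 + 1) al t1 ltac:(lra)) as [M HM].
  { intros t Ht. apply cont_of_ex_derive. destruct (Hs t ltac:(lra)).
    auto_derive. eta_fix. auto. }
  assert (HM0 : 0 <= M) by (specialize (HM al ltac:(lra)); cbv beta in HM; assert (0 <= s al ^ 2) by apply pow2_ge_0; lra).
  assert (Hall := ode2_unique (az z) (az1 z) (az2 z) al t1 t1 (/ al) M ltac:(lra)
    ltac:(left; apply Rinv_0_lt_compat; lra) HM0).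
  assert (Hz0 : az z al = 0).
  { apply Hall; try lra; auto.
    - intros t Ht. apply az_der; auto; lra.
    - intros t Ht. apply az1_der; auto; lra.
    - intros t Ht. specialize (HM t Ht). cbv beta in HM.
      assert (Hode := az_ode n beta s z t HNO ltac:(lra)).
      replace (az2 z t) with (az1 z t * / t + az z t * s t ^ 2) by (unfold Rdiv in Hode; lra).
      eapply Rle_trans; [apply Rabs_triang|].
      rewrite !Rabs_mult.
      rewrite (Rabs_pos_eq (/ t)) by (left; apply Rinv_0_lt_compat; lra).
      rewrite (Rabs_pos_eq (s t ^ 2)) by apply pow2_ge_0.
      assert (/ t <= / al) by (apply Rinv_le_contravar; lra).
      assert (0 <= Rabs (az1 z t)) by apply Rabs_pos.
      assert (0 <= Rabs (az z t)) by apply Rabs_pos.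
      assert (0 <= s t ^ 2) by apply pow2_ge_0.
      nra. }
  lra.
Qed.


Lemma isd_id t : is_derive (fun x : R => x) t 1.
Proof. auto_derive; auto. Qed.

Lemma b_der n beta s z t : NO_profile n beta s z -> 0 < t ->
  is_derive (fun t => az1 z t / t) t (az z t * s t ^ 2 / t).
Proof.
  intros HNO Ht. assert (HNO' := HNO). destruct HNO' as [_ [Hz _]].
  apply (isd_ext (fun t => az1 z t / t) _ t ((az2 z t * t - az1 z t * 1) / t ^ 2)).
  - intros; reflexivity.
  - rewrite <- (az_ode n beta s z t HNO Ht). field. lra.
  - apply (is_derive_div (az1 z) (fun x => x) t (az2 z t) 1); [apply az1_der; auto | apply isd_id | lra].
Qed.

Lemma b_mono n beta s z : (1 <= n)%nat -> NO_profile n beta s z ->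
  forall t1 t2, 0 < t1 <= t2 -> az1 z t1 / t1 <= az1 z t2 / t2.
Proof.
  intros Hn HNO t1 t2 Ht.
  apply (mono_le (fun t => az1 z t / t) (fun t => az z t * s t ^ 2 / t)); [lra | |].
  - intros t Htt. apply b_der with n beta; auto; lra.
  - intros t Htt. assert (0 <= az z t) by (apply (az_bounds n beta s z Hn HNO); lra).
    assert (0 <= s t ^ 2) by apply pow2_ge_0.
    unfold Rdiv. apply Rmult_le_pos; [apply Rmult_le_pos; auto | left; apply Rinv_0_lt_compat; lra].
Qed.

Lemma az_m0 n beta s z : (1 <= n)%nat -> NO_profile n beta s z ->
  (forall t, 0 < t -> az z t < INR n) /\
  exists c d, 0 < c /\ 0 < d /\ forall r, 0 < r < d -> c * r ^ 2 <= INR n - az z r.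
Proof.
  intros Hn HNO.
  assert (Hn1 : 1 <= INR n) by (apply (le_INR 1); auto).
  assert (Hb := az_bounds n beta s z Hn HNO).
  assert (HNO' := HNO). destruct HNO' as [_ [Hz [_ [_ [_ [_ [_ Hzinf]]]]]]].
  destruct (az_inf z Hzinf (INR n / 2) ltac:(lra)) as [R1 [HR1 HR1']].
  destruct (az_near0 n beta s z HNO R1 (INR n / 2) HR1 ltac:(lra)) as [al [Hal Haal]].
  apply Rabs_def2 in Haal. specialize (HR1' R1 ltac:(lra)). apply Rabs_def2 in HR1'.
  destruct (mvt_le (az z) (az1 z) al R1) as [xi [Hxi Exi]]; [lra | intros; apply az_der; auto; lra |].
  assert (Haz1 : az1 z xi < 0).
  { destruct (Rle_dec 0 (az1 z xi)); auto; [|lra].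
    assert (0 <= az1 z xi * (R1 - al)) by (apply Rmult_le_pos; lra). lra. }
  set (bx := az1 z xi / xi).
  assert (Hbx : bx < 0) by (unfold bx, Rdiv; assert (0 < / xi) by (apply Rinv_0_lt_compat; lra); nra).
  destruct (az_zero _ _ _ _ HNO) as [C [d [Hd H0]]].
  assert (Hkey : forall r, 0 < r <= xi -> az z r - bx * r ^ 2 / 2 <= INR n).
  { intros r Hr.
    assert (Hg : forall e, 0 < e <= r -> az z r - bx * r ^ 2 / 2 <= az z e - bx * e ^ 2 / 2).
    { intros e He.
      apply (mono_ge (fun t => az z t - bx * t ^ 2 / 2) (fun t => az1 z t - bx * t)); [lra | |].
      - intros t Ht. apply (isd_ext (fun t => az z t + (- bx / 2) * (t * t)) _ t (az1 z t + (- bx / 2) * (1 * t + t * 1))).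
        + intros; simpl; field.
        + field.
        + apply isd_plus; [apply az_der; auto; lra|]. apply is_derive_scal. apply isd_mult; apply isd_id.
      - intros t Ht. assert (Hm := b_mono n beta s z Hn HNO t xi ltac:(lra)).
        fold bx in Hm. 
        assert (az1 z t = t * (az1 z t / t)) by (field; lra).
        assert (az1 z t / t - bx <= 0) by lra. nra. }
    apply Rnot_lt_le. intros Hc.
    set (eta := az z r - bx * r ^ 2 / 2 - INR n).
    assert (Heta : 0 < eta) by (unfold eta; lra).
    assert (HC : 0 <= Rabs C) by apply Rabs_pos.
    assert (HCa : C <= Rabs C) by apply Rle_abs.
    set (e := Rmin (r / 2) (Rmin (d / 2) (Rmin 1 (eta / (2 * (Rabs C + 1 - bx)))))).
    assert (He1 : 0 < e).
    { unfold e. repeat apply Rmin_glb_lt; try lra. apply Rdiv_lt_0_compat; lra. }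
    assert (He2 : e <= r / 2) by apply Rmin_l.
    assert (He3 : e <= d / 2) by (eapply Rle_trans; [apply Rmin_r | apply Rmin_l]).
    assert (He4 : e <= 1) by (eapply Rle_trans; [apply Rmin_r | eapply Rle_trans; [apply Rmin_r | apply Rmin_l]]).
    assert (He5 : e <= eta / (2 * (Rabs C + 1 - bx))) by (eapply Rle_trans; [apply Rmin_r | eapply Rle_trans; [apply Rmin_r | apply Rmin_r]]).
    assert (He6 : e * (2 * (Rabs C + 1 - bx)) <= eta).
    { apply Rmult_le_compat_r with (r := 2 * (Rabs C + 1 - bx)) in He5; [|lra].
      replace (eta / (2 * (Rabs C + 1 - bx)) * (2 * (Rabs C + 1 - bx))) with eta in He5 by (field; lra). lra. }
    specialize (Hg e ltac:(lra)). specialize (H0 e ltac:(lra)). apply Rabs_le_inv in H0.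
    assert (C * e ^ 2 <= Rabs C * e) by (simpl; nra).
    assert (Hee : e * e <= e) by nra.
    assert (- bx * e ^ 2 / 2 <= - bx * e).
    { replace (- bx * e ^ 2 / 2) with ((- bx) * (e * e) * / 2) by (simpl; field).
      assert ((- bx) * (e * e) <= (- bx) * e) by (apply Rmult_le_compat_l; lra).
      assert (0 <= (- bx) * e) by nra. lra. }
    unfold eta in He6. nra. }
  split.
  - intros t Ht.
    destruct (Rle_dec t xi) as [Hle|Hgt].
    + specialize (Hkey t ltac:(lra)). assert (0 < t ^ 2) by (apply pow_lt; lra). nra.
    + apply Rnot_le_lt in Hgt. apply Rnot_le_lt. intros Hge.
      assert (Hxn : az z xi < INR n).
      { specialize (Hkey xi ltac:(lra)). assert (0 < xi ^ 2) by (apply pow_lt; lra). nra. }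
      destruct (mvt_le (az z) (az1 z) xi t) as [et [Het Eet]]; [lra | intros; apply az_der; auto; lra |].
      assert (Haz1e : 0 < az1 z et).
      { destruct (Rlt_dec 0 (az1 z et)); auto.
        assert (az1 z et * (t - xi) <= 0) by (apply Rmult_le_0_r; lra). lra. }
      assert (Hbe : 0 < az1 z et / et) by (apply Rdiv_lt_0_compat; lra).
      assert (Hinc : forall w, et <= w -> 0 < az1 z w).
      { intros w Hw. assert (Hm := b_mono n beta s z Hn HNO et w ltac:(lra)).
        assert (az1 z w = w * (az1 z w / w)) by (field; lra). 
        assert (0 < az1 z w / w) by lra. nra. }
      destruct (mvt_le (az z) (az1 z) et (et + 1)) as [c1 [Hc1 Ec1]]; [lra | intros; apply az_der; auto; lra |].
      assert (Hp : 0 < az z (et + 1)).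
      { assert (0 <= az z et) by (apply Hb; lra). specialize (Hinc c1 ltac:(lra)). nra. }
      destruct (az_inf z Hzinf (az z (et + 1)) Hp) as [R2 [HR2 HR2']].
      set (w := Rmax R2 (et + 1)).
      assert (Hw : R2 <= w /\ et + 1 <= w) by (split; [apply Rmax_l | apply Rmax_r]).
      specialize (HR2' w ltac:(lra)). apply Rabs_def2 in HR2'.
      assert (az z (et + 1) <= az z w).
      { apply (mono_le (az z) (az1 z)); [lra | intros; apply az_der; auto; lra | intros; left; apply Hinc; lra]. }
      lra.
  - exists (- bx / 2), xi. repeat split; try lra.
    intros r Hr. specialize (Hkey r ltac:(lra)). lra.
Qed.

Lemma az_edge_lb n beta s z : (1 <= n)%nat -> NO_profile n beta s z ->
  exists c0 R1, 0 < c0 /\ 0 < R1 /\ forall r, R1 <= r -> c0 * exp (- (3/2) * r) <= az z r.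
Proof.
  intros Hn HNO.
  assert (Hb := az_bounds n beta s z Hn HNO).
  assert (Hp := az_pos n beta s z Hn HNO).
  assert (HNO' := HNO). destruct HNO' as [_ [Hz _]].
  destruct (s_inf n beta s z HNO) as [R1 [HR1 HR1']].
  set (M := 3/2).
  set (phi := fun t => az1 z t + M * az z t).
  assert (Hphi : forall t0, R1 <= t0 -> 0 <= phi t0).
  { intros t0 Ht0. apply Rnot_lt_le. intros Hneg.
    set (psi := fun t => phi t * (exp (- M * t) / t)).
    assert (Hpsi : forall t, t0 <= t -> psi t <= psi t0).
    { intros t Ht.
      apply (mono_ge psi (fun t => exp (- M * t) / t * (az z t * (s t ^ 2 - M ^ 2 - M / t)))); [lra | |].
      - intros w Hw. unfold psi.
        apply (isd_ext (fun t => phi t * (exp (- M * t) / t)) _ w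
          ((az2 z w + M * az1 z w) * (exp (- M * w) / w) + phi w * ((- M * exp (- M * w) * w - exp (- M * w)) / w ^ 2))).
        + intros; reflexivity.
        + assert (Hode := az_ode n beta s z w HNO ltac:(lra)). unfold phi.
          assert (E : az z w * (s w ^ 2 - M ^ 2 - M / w) = (az2 z w - az1 z w / w) - az z w * (M ^ 2 + M / w)).
          { rewrite Hode. field. lra. }
          rewrite E. field. lra.
        + apply (isd_mult phi (fun t => exp (- M * t) / t)).
          * unfold phi. apply isd_plus; [apply az1_der; auto; lra|].
            apply is_derive_scal. apply az_der; auto; lra.
          * auto_derive; [lra | field; lra].
      - intros w Hw. assert (0 <= az z w) by (apply Hb; lra).
        assert (Hs := HR1' w ltac:(lra)).
        assert (s w ^ 2 - M ^ 2 - M / w <= 0).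
        { assert (0 < M / w) by (unfold M; apply Rdiv_lt_0_compat; lra). unfold M in *. simpl. nra. }
        assert (0 < exp (- M * w) / w) by (apply Rdiv_lt_0_compat; [apply exp_pos | lra]).
        assert (az z w * (s w ^ 2 - M ^ 2 - M / w) <= 0) by nra. nra. }
    assert (Hphit : forall t, t0 <= t -> phi t <= phi t0).
    { intros t Ht. specialize (Hpsi t Ht). unfold psi in Hpsi.
      assert (He : exp (- M * t0) <= exp (- M * t) * exp (M * (t - t0))).
      { rewrite <- exp_plus. right. f_equal. ring. }
      assert (1 <= exp (M * (t - t0))) by (rewrite <- exp_0; apply exp_le_inc || (destruct (Req_dec t t0); [subst; right; f_equal; ring | left; apply exp_increasing; unfold M; nra])).
      assert (Hq : phi t <= phi t0 * (exp (M * (t - t0)) * (t / t0))).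
      { assert (0 < exp (- M * t)) by apply exp_pos.
        assert (Hpsi' : phi t * exp (- M * t) * / t <= phi t0 * exp (- M * t0) * / t0) by (unfold Rdiv in Hpsi; lra).
        apply Rmult_le_reg_r with (exp (- M * t) * / t); [apply Rmult_lt_0_compat; [auto | apply Rinv_0_lt_compat; lra]|].
        replace (phi t0 * (exp (M * (t - t0)) * (t / t0)) * (exp (- M * t) * / t)) with
          (phi t0 * exp (- M * t0) * / t0).
        - lra.
        - replace (exp (- M * t0)) with (exp (M * (t - t0)) * exp (- M * t)) by (rewrite <- exp_plus; f_equal; ring).
          field. split; lra. }
      assert (1 <= t / t0) by (apply (Rmult_le_reg_r t0); [lra|]; unfold Rdiv; rewrite Rmult_assoc, Rinv_l; lra).
      assert (1 <= exp (M * (t - t0)) * (t / t0)) by nra.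
      nra. }
    set (T := (az z t0 + 1) / (- phi t0)).
    assert (HT : 0 < T) by (unfold T; apply Rdiv_lt_0_compat; [assert (0 <= az z t0) by (apply Hb; lra); lra | lra]).
    assert (Hdec : az z (t0 + T) - phi t0 * (t0 + T) <= az z t0 - phi t0 * t0).
    { apply (mono_ge (fun t => az z t - phi t0 * t) (fun t => az1 z t - phi t0)); [lra | |].
      - intros w Hw. apply (isd_ext (fun t => az z t + (- phi t0) * t) _ w (az1 z w + (- phi t0) * 1)); [intros; ring | ring |].
        apply isd_plus; [apply az_der; auto; lra | apply is_derive_scal; apply isd_id].
      - intros w Hw. specialize (Hphit w ltac:(lra)). unfold phi in Hphit.
        assert (0 <= az z w) by (apply Hb; lra). unfold phi, M in *. lra. }
    assert (phi t0 * T = - (az z t0 + 1)) by (unfold T; field; lra).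
    assert (0 <= az z (t0 + T)) by (apply Hb; lra).
    nra. }
  exists (az z R1 * exp (M * R1)), R1. split; [apply Rmult_lt_0_compat; [apply Hp; lra | apply exp_pos]|]. split; auto.
  intros r Hr.
  assert (Hm : az z R1 * exp (M * R1) <= az z r * exp (M * r)).
  { apply (mono_le (fun t => az z t * exp (M * t)) (fun t => (az1 z t + M * az z t) * exp (M * t))); [lra | |].
    - intros w Hw. apply is_derive_mul_expc. apply az_der; auto; lra.
    - intros w Hw. apply Rmult_le_pos; [apply Hphi; lra | left; apply exp_pos]. }
  replace (- (3/2) * r) with (- M * r) by (unfold M; ring).
  assert (0 < exp (- M * r)) by apply exp_pos.
  assert (Hx : exp (M * r) * exp (- M * r) = 1) by (rewrite <- exp_plus; replace (M * r + - M * r) with 0 by ring; apply exp_0).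
  apply Rmult_le_compat_r with (r := exp (- M * r)) in Hm; [|lra].
  replace (az z r * exp (M * r) * exp (- M * r)) with (az z r * (exp (M * r) * exp (- M * r))) in Hm by ring.
  rewrite Hx, Rmult_1_r in Hm. lra.
Qed.


Definition Gd (t u u1 v v1 v2 y y1 : R) :=
  v * v1 + t * v1 * v1 + t * v * v2 + 2 * (v * y * u + t * v1 * y * u + t * v * y1 * u + t * v * y * u1).
Definition Hd (t v v1 y y1 y2 : R) :=
  v ^ 2 * y1 / y + t * (2 * v * v1) * y1 / y + t * v ^ 2 * y2 / y - t * v ^ 2 * y1 * y1 / y ^ 2.
Definition Fdv (c g t u v y s zt : R) :=
  let Q := g / 2 * s ^ 2 + c * (2 * v ^ 2) in
  let P := 2 * y ^ 2 + Q in
  t * u ^ 2 * (P * Q + 4 * c * v ^ 2 * y ^ 2) / y ^ 2 + g * t * s ^ 2 * (y - zt) * v ^ 2 / y.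

Lemma alg_F (c g t u u1 v v1 v2 y y1 y2 s zt : R) : t <> 0 -> y <> 0 ->
  v2 + v1 / t - v / t ^ 2 + 2 * (2 * y1 * u + y * u1 + / t * y * u) - c * (4 * v * u ^ 2) - g * v * s ^ 2 = 0 ->
  v1 * y - v * y1 + (2 * y ^ 2 + g / 2 * s ^ 2 + c * (2 * v ^ 2)) * u = 0 ->
  y2 + y1 / t - y / t ^ 2 = g * zt * s ^ 2 ->
  Gd t u u1 v v1 v2 y y1 - Hd t v v1 y y1 y2 = Fdv c g t u v y s zt.
Proof.
  intros Ht Hy E1 E2 E3.
  assert (Hv2 : v2 = - (v1 / t - v / t ^ 2 + 2 * (2 * y1 * u + y * u1 + / t * y * u) - c * (4 * v * u ^ 2) - g * v * s ^ 2)) by lra.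
  assert (Hy2 : y2 = g * zt * s ^ 2 - y1 / t + y / t ^ 2) by lra.
  assert (Hv1 : v1 = (v * y1 - (2 * y ^ 2 + g / 2 * s ^ 2 + c * (2 * v ^ 2)) * u) / y).
  { apply (Rmult_eq_reg_r y); auto. unfold Rdiv. rewrite Rmult_assoc, Rinv_l by auto. lra. }
  unfold Gd, Hd, Fdv. rewrite Hv2, Hy2. rewrite Hv1. field. split; auto.
Qed.

Definition Ff (c g : R) (u v y s : R -> R) (w : R) :=
  - w * u w * v w * (g / 2 * s w ^ 2 + c * (2 * v w ^ 2)) / y w.

Lemma F_deriv (c g : R) (u v y s : R -> R) (zt t : R) :
  0 < t ->
  (forall w, 0 < w -> ex_derive u w /\ ex_derive v w /\ ex_derive (Derive v) w /\
     ex_derive y w /\ ex_derive (Derive y) w /\ y w <> 0 /\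
     Derive v w * y w - v w * Derive y w + (2 * y w ^ 2 + g / 2 * s w ^ 2 + c * (2 * v w ^ 2)) * u w = 0) ->
  Derive (Derive v) t + Derive v t / t - v t / t ^ 2
      + 2 * (2 * Derive y t * u t + y t * Derive u t + / t * y t * u t)
      - c * (4 * v t * u t ^ 2) - g * v t * s t ^ 2 = 0 ->
  Derive (Derive y) t + Derive y t / t - y t / t ^ 2 = g * zt * s t ^ 2 ->
  is_derive (Ff c g u v y s) t (Fdv c g t (u t) (v t) (y t) (s t) zt).
Proof.
  intros Ht Hall E1 E3.
  destruct (Hall t Ht) as [Hu [Hv [Hv' [Hy [Hy' [Hy0 E2]]]]]].
  apply (isd_ext_loc (fun w => (w * v w * Derive v w + 2 * w * v w * y w * u w) - w * v w ^ 2 * Derive y w / y w)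
     (Ff c g u v y s) t
     (Gd t (u t) (Derive u t) (v t) (Derive v t) (Derive (Derive v) t) (y t) (Derive y t)
      - Hd t (v t) (Derive v t) (y t) (Derive y t) (Derive (Derive y) t)) _ (t / 2)).
  - lra.
  - intros w Hw. apply Rabs_def2 in Hw.
    destruct (Hall w ltac:(lra)) as [_ [_ [_ [_ [_ [Hyw E2w]]]]]].
    assert (Hv1 : Derive v w = (v w * Derive y w - (2 * y w ^ 2 + g / 2 * s w ^ 2 + c * (2 * v w ^ 2)) * u w) / y w).
    { apply (Rmult_eq_reg_r (y w)); auto. unfold Rdiv. rewrite Rmult_assoc, Rinv_l by auto. lra. }
    unfold Ff. rewrite Hv1. field. auto.
  - apply alg_F; auto; lra.
  - auto_derive.
    + eta_fix. repeat split; auto.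
    + eta_fix. unfold Gd, Hd. field. auto.
Qed.

Lemma Fdv_parts (c g t u v y s zt : R) : y <> 0 ->
  Fdv c g t u v y s zt =
   t * u ^ 2 * ((2 * y ^ 2 + (g / 2 * s ^ 2 + c * (2 * v ^ 2))) * (g / 2 * s ^ 2 + c * (2 * v ^ 2)) + 4 * c * v ^ 2 * y ^ 2) / y ^ 2
   + g * t * s ^ 2 * v ^ 2 * ((y - zt) * y) / y ^ 2.
Proof. intros Hy. unfold Fdv. simpl. field. auto. Qed.

Lemma Fdv_nonneg (c g t u v y s zt : R) : 0 < t -> 0 < g -> 0 <= c -> y <> 0 -> 0 <= (y - zt) * y ->
  0 <= Fdv c g t u v y s zt.
Proof.
  intros Ht Hg Hc Hy Hxy. rewrite Fdv_parts by auto.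
  assert (Hy2 : 0 < y ^ 2) by (apply pow2_gt_0; auto).
  assert (0 <= s ^ 2) by apply pow2_ge_0. assert (0 <= v ^ 2) by apply pow2_ge_0.
  assert (0 <= u ^ 2) by apply pow2_ge_0.
  assert (0 <= g / 2 * s ^ 2 + c * (2 * v ^ 2)) by (apply Rplus_le_le_0_compat; apply Rmult_le_pos; lra).
  assert (Hiy : 0 < / y ^ 2) by (apply Rinv_0_lt_compat; lra).
  assert (K1 : 0 <= (2 * y ^ 2 + (g / 2 * s ^ 2 + c * (2 * v ^ 2))) * (g / 2 * s ^ 2 + c * (2 * v ^ 2))) by (apply Rmult_le_pos; lra).
  assert (K2 : 0 <= 4 * c * v ^ 2 * y ^ 2) by (apply Rmult_le_pos; [apply Rmult_le_pos; [apply Rmult_le_pos|]|]; lra).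
  assert (K3 : 0 <= t * u ^ 2) by (apply Rmult_le_pos; lra).
  assert (K4 : 0 <= g * t * s ^ 2 * v ^ 2) by (apply Rmult_le_pos; [apply Rmult_le_pos; [apply Rmult_le_pos|]|]; lra).
  unfold Rdiv. apply Rplus_le_le_0_compat; apply Rmult_le_pos; try lra; apply Rmult_le_pos; lra.
Qed.

Lemma sq0 (x : R) : x ^ 2 = 0 -> x = 0.
Proof. intros H. simpl in H. rewrite Rmult_1_r in H. apply Rmult_integral in H. destruct H; auto. Qed.

Lemma Fdv_zero (c g t u v y s zt : R) : 0 < t -> 0 < g -> 0 <= c -> y <> 0 -> 0 <= (y - zt) * y ->
  Fdv c g t u v y s zt = 0 -> (u = 0 \/ s = 0) /\ s ^ 2 * v ^ 2 * ((y - zt) * y) = 0.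
Proof.
  intros Ht Hg Hc Hy Hxy H0. rewrite Fdv_parts in H0 by auto.
  assert (Hy2 : 0 < y ^ 2) by (apply pow2_gt_0; auto).
  assert (Hiy : 0 < / y ^ 2) by (apply Rinv_0_lt_compat; lra).
  assert (Hs2 : 0 <= s ^ 2) by apply pow2_ge_0. assert (Hv2 : 0 <= v ^ 2) by apply pow2_ge_0.
  assert (Hu2 : 0 <= u ^ 2) by apply pow2_ge_0.
  set (S := g / 2 * s ^ 2) in *.
  assert (HS : 0 <= S) by (unfold S; apply Rmult_le_pos; lra).
  set (Q := S + c * (2 * v ^ 2)) in *.
  assert (HcQ : 0 <= c * (2 * v ^ 2)) by (apply Rmult_le_pos; lra).
  assert (HQ : S <= Q) by (unfold Q; lra).
  set (W := (2 * y ^ 2 + Q) * Q + 4 * c * v ^ 2 * y ^ 2) in *.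
  assert (HW : S * S <= W).
  { unfold W. assert (S * S <= Q * Q) by (apply Rmult_le_compat; lra).
    assert (0 <= 2 * y ^ 2 * Q) by (apply Rmult_le_pos; lra).
    assert (0 <= 4 * c * v ^ 2 * y ^ 2) by (apply Rmult_le_pos; [apply Rmult_le_pos; [apply Rmult_le_pos|]|]; lra).
    nra. }
  assert (Htu : 0 <= t * u ^ 2) by (apply Rmult_le_pos; lra).
  assert (HSS : 0 <= S * S) by (apply Rmult_le_pos; lra).
  assert (HA1 : t * u ^ 2 * (S * S) <= t * u ^ 2 * W) by (apply Rmult_le_compat_l; lra).
  assert (HA2 : 0 <= t * u ^ 2 * (S * S)) by (apply Rmult_le_pos; lra).
  assert (HB1 : 0 <= g * t * s ^ 2 * v ^ 2 * ((y - zt) * y)) by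
    (apply Rmult_le_pos; [apply Rmult_le_pos; [apply Rmult_le_pos; [apply Rmult_le_pos|]|]|]; lra).
  unfold Rdiv in H0.
  assert (HX : t * u ^ 2 * W * / y ^ 2 >= 0) by (apply Rle_ge, Rmult_le_pos; lra).
  assert (HY : g * t * s ^ 2 * v ^ 2 * ((y - zt) * y) * / y ^ 2 >= 0) by (apply Rle_ge, Rmult_le_pos; lra).
  assert (HX0 : t * u ^ 2 * W * / y ^ 2 = 0) by lra.
  assert (HY0 : g * t * s ^ 2 * v ^ 2 * ((y - zt) * y) * / y ^ 2 = 0) by lra.
  apply Rmult_integral in HX0. destruct HX0 as [HX0|HX0]; [|lra].
  apply Rmult_integral in HY0. destruct HY0 as [HY0|HY0]; [|lra].
  split.
  - assert (t * u ^ 2 * (S * S) = 0) by lra.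
    apply Rmult_integral in H. destruct H as [H|H].
    + apply Rmult_integral in H. destruct H as [H|H]; [lra|]. left; apply sq0; auto.
    + apply Rmult_integral in H. right. destruct H as [H|H]; unfold S in H;
      apply Rmult_integral in H; destruct H as [H|H]; try lra; apply sq0; auto.
  - replace (g * t * s ^ 2 * v ^ 2 * ((y - zt) * y)) with ((g * t) * (s ^ 2 * v ^ 2 * ((y - zt) * y))) in HY0 by ring.
    apply Rmult_integral in HY0. destruct HY0 as [H|H]; auto. assert (0 < g * t) by nra. lra.
Qed.


Definition KK gamma n m := 2 * gamma * INR n + IZR m.

Lemma y_der gamma n m (z : R -> R) t : C2_pos z -> 0 < t ->
  is_derive (aux_y gamma n m z) t (gamma * Derive z t + KK gamma n m / (2 * t ^ 2)).
Proof.
  intros Hz Ht. destruct (Hz t Ht) as [H1 H2]. unfold aux_y, KK.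
  auto_derive; eta_fix; [side | field; side].
Qed.

Lemma y_Derive gamma n m (z : R -> R) t : C2_pos z -> 0 < t ->
  Derive (aux_y gamma n m z) t = gamma * Derive z t + KK gamma n m / (2 * t ^ 2).
Proof. intros Hz Ht. apply is_derive_unique. apply y_der; auto. Qed.

Lemma y_der2 gamma n m (z : R -> R) t : C2_pos z -> 0 < t ->
  is_derive (Derive (aux_y gamma n m z)) t (gamma * Derive (Derive z) t - KK gamma n m / t ^ 3).
Proof.
  intros Hz Ht. destruct (Hz t Ht) as [H1 H2].
  apply (isd_ext_loc (fun w => gamma * Derive z w + KK gamma n m / (2 * w ^ 2)) _ t
     (gamma * Derive (Derive z) t + KK gamma n m * (- (2 * (2 * t)) / (2 * t ^ 2) ^ 2)) _ (t / 2)); [lra | | |].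
  - intros x Hx. apply Rabs_def2 in Hx. symmetry. apply y_Derive; auto; lra.
  - field; lra.
  - auto_derive; eta_fix; [side | field; side].
Qed.

Lemma y_ex gamma n m (z : R -> R) t : C2_pos z -> 0 < t ->
  ex_derive (aux_y gamma n m z) t /\ ex_derive (Derive (aux_y gamma n m z)) t.
Proof.
  intros Hz Ht. split; [eexists; apply y_der; auto | eexists; apply y_der2; auto].
Qed.

Lemma y_ode gamma n m beta s z t : NO_profile n beta s z -> 0 < t ->
  Derive (Derive (aux_y gamma n m z)) t + Derive (aux_y gamma n m z) t / t - aux_y gamma n m z t / t ^ 2
  = gamma * z t * s t ^ 2.
Proof.
  intros HNO Ht. assert (HNO' := HNO). destruct HNO' as [_ [Hz [_ [Hzo _]]]].
  rewrite (is_derive_unique _ _ _ (y_der2 gamma n m z t Hz Ht)).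
  rewrite y_Derive by auto. specialize (Hzo t Ht). unfold aux_y.
  replace (gamma * z t * s t ^ 2) with (gamma * (z t * s t ^ 2)) by ring.
  replace (z t * s t ^ 2) with (Derive (Derive z) t + Derive z t / t - z t / t ^ 2) by lra.
  change (2 * gamma * INR n + IZR m) with (KK gamma n m). generalize (KK gamma n m); intros K. field. lra.
Qed.

Lemma ty gamma n m (z : R -> R) t : 0 < t -> t * aux_y gamma n m z t = gamma * az z t - KK gamma n m / 2.
Proof. intros Ht. unfold aux_y, az. change (2 * gamma * INR n + IZR m) with (KK gamma n m). generalize (KK gamma n m); intros K. field. lra. Qed.

Lemma txy gamma n m (z : R -> R) t : 0 < t ->
  t * (aux_y gamma n m z t - z t) = (gamma - 1) * az z t - KK gamma n m / 2.
Proof. intros Ht. unfold aux_y, az. change (2 * gamma * INR n + IZR m) with (KK gamma n m). generalize (KK gamma n m); intros K. field. lra. Qed.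


Lemma F_le0 (F : R -> R) : (forall t1 t2, 0 < t1 <= t2 -> F t1 <= F t2) ->
  (forall e, 0 < e -> exists R0, 0 < R0 /\ forall t, R0 <= t -> Rabs (F t) < e) ->
  forall t, 0 < t -> F t <= 0.
Proof.
  intros Hm Hinf t Ht. apply Rnot_lt_le. intros Hp.
  destruct (Hinf (F t) Hp) as [R0 [HR0 HR0']].
  set (w := Rmax t R0). specialize (HR0' w (Rmax_r _ _)). apply Rabs_def2 in HR0'.
  specialize (Hm t w ltac:(split; [lra | apply Rmax_l])). lra.
Qed.

Lemma F_zero_all (F : R -> R) : (forall t1 t2, 0 < t1 <= t2 -> F t1 <= F t2) ->
  (forall e, 0 < e -> exists R0, 0 < R0 /\ forall t, R0 <= t -> Rabs (F t) < e) ->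
  (forall e, 0 < e -> exists d, 0 < d /\ forall t, 0 < t < d -> Rabs (F t) < e) ->
  forall t, 0 < t -> F t = 0.
Proof.
  intros Hm Hinf H0 t Ht. assert (H1 := F_le0 F Hm Hinf t Ht).
  apply Rle_antisym; auto. apply Rnot_lt_le. intros Hn.
  destruct (H0 (- F t) ltac:(lra)) as [d [Hd Hd']].
  set (w := Rmin t (d / 2)).
  assert (Hw : 0 < w <= t /\ w < d) by (unfold w; split; [split; [apply Rmin_glb_lt; lra | apply Rmin_l] | eapply Rle_lt_trans; [apply Rmin_r | lra]]).
  specialize (Hd' w ltac:(lra)). apply Rabs_def2 in Hd'.
  specialize (Hm w t ltac:(lra)). lra.
Qed.

Lemma u_zero (u s : R -> R) : (forall t, 0 < t -> ex_derive u t) ->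
  (forall p q, 0 < p < q -> (forall t, p < t < q -> s t = 0) -> False) ->
  (forall t, 0 < t -> u t = 0 \/ s t = 0) -> forall t, 0 < t -> u t = 0.
Proof.
  intros Hu Hs Hus t1 Ht1. destruct (Req_dec (u t1) 0) as [|Hne]; auto. exfalso.
  assert (Hc := cont_of_ex_derive u t1 (Hu t1 Ht1)).
  unfold continuity_pt, continue_in, limit1_in, limit_in in Hc.
  destruct (Hc (Rabs (u t1)) ltac:(apply Rabs_pos_lt; auto)) as [al [Hal Hal']].
  set (d := Rmin al (t1 / 2)).
  assert (Hd : 0 < d /\ d <= al /\ d <= t1 / 2) by (unfold d; split; [apply Rmin_glb_lt; lra | split; [apply Rmin_l | apply Rmin_r]]).
  apply (Hs (t1 - d) (t1 + d)); [lra|].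
  intros t Ht. destruct (Hus t ltac:(lra)) as [Hu0|]; auto. exfalso.
  destruct (Req_dec t t1) as [->|Hne2]; [auto|].
  specialize (Hal' t). simpl in Hal'. unfold R_dist in Hal'.
  assert (Rabs (u t - u t1) < Rabs (u t1)).
  { apply Hal'. split; [split; [exact I | auto] | apply Rabs_def1; lra]. }
  rewrite Hu0 in H. rewrite Rminus_0_l, Rabs_Ropp in H. lra.
Qed.

Lemma v_prop (v y : R -> R) : (forall t, 0 < t -> ex_derive v t /\ ex_derive y t /\ y t <> 0 /\
    Derive v t * y t - v t * Derive y t = 0) ->
  forall t, 0 < t -> v t = v 1 / y 1 * y t.
Proof.
  intros H t Ht.
  assert (Hd : forall w, 0 < w -> is_derive (fun w => v w / y w) w 0).
  { intros w Hw. destruct (H w Hw) as [Hv [Hy [Hy0 E]]].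
    apply (isd_ext (fun w => v w / y w) _ w ((Derive v w * y w - v w * Derive y w) / y w ^ 2)); [intros; reflexivity | rewrite E; field; auto |].
    apply is_derive_div; auto; apply ex_isd; auto. }
  assert (Hc : v t / y t = v 1 / y 1).
  { destruct (Rle_dec t 1).
    - apply Rle_antisym.
      + apply (mono_le (fun w => v w / y w) (fun _ => 0)); [lra | intros; apply Hd; lra | intros; lra].
      + apply (mono_ge (fun w => v w / y w) (fun _ => 0)); [lra | intros; apply Hd; lra | intros; lra].
    - apply Rle_antisym.
      + apply (mono_ge (fun w => v w / y w) (fun _ => 0)); [lra | intros; apply Hd; lra | intros; lra].
      + apply (mono_le (fun w => v w / y w) (fun _ => 0)); [lra | intros; apply Hd; lra | intros; lra]. }
  destruct (H t Ht) as [_ [_ [Hy0 _]]]. rewrite <- Hc. field. auto.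
Qed.

Lemma pow_sum_to0 c1 c2 e1 e2 : 0 <= c1 -> 0 <= c2 -> 0 < e1 -> (0 < e2 \/ c2 = 0) ->
  forall e, 0 < e -> exists d, 0 < d /\ forall t, 0 < t < d -> c1 * Rpower t e1 + c2 * Rpower t e2 < e.
Proof.
  intros Hc1 Hc2 He1 He2 e He.
  destruct (Rpower_to0 e1 He1 (e / (2 * (c1 + 1))) ltac:(apply Rdiv_lt_0_compat; lra)) as [d1 [Hd1 H1]].
  assert (H2 : exists d2, 0 < d2 /\ forall t, 0 < t < d2 -> c2 * Rpower t e2 < e / 2).
  { destruct He2 as [He2| ->].
    - destruct (Rpower_to0 e2 He2 (e / (2 * (c2 + 1))) ltac:(apply Rdiv_lt_0_compat; lra)) as [d2 [Hd2 H2]].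
      exists d2. split; auto. intros t Ht. specialize (H2 t Ht).
      assert (0 < Rpower t e2) by apply Rpower_pos.
      apply Rle_lt_trans with ((c2 + 1) * Rpower t e2); [nra|].
      apply (Rmult_lt_compat_l (c2 + 1)) in H2; [|lra].
      replace ((c2 + 1) * (e / (2 * (c2 + 1)))) with (e / 2) in H2 by (field; lra). lra.
    - exists 1. split; [lra|]. intros. rewrite Rmult_0_l. lra. }
  destruct H2 as [d2 [Hd2 H2]].
  exists (Rmin d1 d2). split; [apply Rmin_glb_lt; auto|].
  intros t Ht.
  assert (t < d1) by (eapply Rlt_le_trans; [apply Ht | apply Rmin_l]).
  assert (t < d2) by (eapply Rlt_le_trans; [apply Ht | apply Rmin_r]).
  specialize (H1 t ltac:(lra)). specialize (H2 t ltac:(lra)).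
  assert (0 < Rpower t e1) by apply Rpower_pos.
  assert (c1 * Rpower t e1 <= (c1 + 1) * Rpower t e1) by nra.
  apply (Rmult_lt_compat_l (c1 + 1)) in H1; [|lra].
  replace ((c1 + 1) * (e / (2 * (c1 + 1)))) with (e / 2) in H1 by (field; lra). lra.
Qed.

Lemma asym_bound (f : R -> R) c k : asym0_pow f c k ->
  exists d, 0 < d /\ forall t, 0 < t < d ->
    Rabs (f t) <= 2 * Rabs c * Rpower t k /\ Rabs c / 2 * Rpower t k <= Rabs (f t).
Proof.
  intros [eps [Heps Hev]].
  destruct (at_right0_ex _ Hev) as [d1 [Hd1 H1]].
  destruct (lim0_ex _ Heps (1/2) ltac:(lra)) as [d2 [Hd2 H2]].
  exists (Rmin d1 d2). split; [apply Rmin_glb_lt; auto|].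
  intros t Ht.
  assert (t < d1) by (eapply Rlt_le_trans; [apply Ht | apply Rmin_l]).
  assert (t < d2) by (eapply Rlt_le_trans; [apply Ht | apply Rmin_r]).
  specialize (H1 t ltac:(lra)). specialize (H2 t ltac:(lra)). apply Rabs_def2 in H2.
  rewrite H1. rewrite !Rabs_mult. rewrite (Rabs_pos_eq (Rpower t k)) by (left; apply Rpower_pos).
  rewrite (Rabs_pos_eq (1 + eps t)) by lra.
  assert (0 < Rpower t k) by apply Rpower_pos. assert (0 <= Rabs c) by apply Rabs_pos.
  assert (0 <= Rabs c * Rpower t k) by (apply Rmult_le_pos; lra).
  split; nra.
Qed.


Lemma Ff_abs (c g : R) (u v y s : R -> R) t : 0 < t -> 0 <= c -> 0 < g -> y t <> 0 ->
  Rabs (Ff c g u v y s t) * Rabs (t * y t) = t ^ 2 * (Rabs (u t) * Rabs (v t)) * (g / 2 * s t ^ 2 + c * (2 * v t ^ 2)).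
Proof.
  intros Ht Hc Hg Hy. unfold Ff.
  assert (HQ : 0 <= g / 2 * s t ^ 2 + c * (2 * v t ^ 2)).
  { assert (0 <= s t ^ 2) by apply pow2_ge_0. assert (0 <= v t ^ 2) by apply pow2_ge_0.
    apply Rplus_le_le_0_compat; apply Rmult_le_pos; lra. }
  rewrite <- Rabs_mult.
  replace (- t * u t * v t * (g / 2 * s t ^ 2 + c * (2 * v t ^ 2)) / y t * (t * y t))
    with (- (t ^ 2 * (u t * v t) * (g / 2 * s t ^ 2 + c * (2 * v t ^ 2)))) by (field; auto).
  rewrite Rabs_Ropp, !Rabs_mult. rewrite (Rabs_pos_eq (t ^ 2)) by (apply pow2_ge_0).
  rewrite (Rabs_pos_eq (g / 2 * s t ^ 2 + c * (2 * v t ^ 2))) by auto. ring.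
Qed.

Lemma F_inf (c g : R) (u v y s : R -> R) Cu pu Cv pv R0 Rs Ry kap th :
  0 <= c <= 1 -> 0 < g -> 0 < kap -> 0 <= th < 2 * sqrt g -> 
  (forall t, R0 <= t -> Rabs (u t) <= Cu * Rpower t pu * exp (- sqrt g * t)) ->
  (forall t, R0 <= t -> Rabs (v t) <= Cv * Rpower t pv * exp (- sqrt g * t)) ->
  (forall t, Rs <= t -> Rabs (s t) <= 3/2) ->
  (forall t, Ry <= t -> kap * exp (- th * t) <= Rabs (t * y t)) ->
  forall e, 0 < e -> exists R1, 0 < R1 /\ forall t, R1 <= t -> Rabs (Ff c g u v y s t) < e.
Proof.
  intros Hc Hg Hk Hth Hu Hv Hs Hy e He.
  assert (Hsg : 0 < sqrt g) by (apply sqrt_lt_R0; lra).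
  destruct (Rpower_exp_toinf pv (sqrt g) Hsg (1 / (Rabs Cv + 1))) as [Rv HRv].
  { apply Rdiv_lt_0_compat; [lra | assert (0 <= Rabs Cv) by apply Rabs_pos; lra]. }
  set (Qm := g * (9/8) + 2).
  set (A := Rabs Cu * Rabs Cv * Qm / kap).
  assert (HA : 0 <= A).
  { unfold A, Qm. unfold Rdiv. apply Rmult_le_pos; [|left; apply Rinv_0_lt_compat; lra].
    apply Rmult_le_pos; [apply Rmult_le_pos; apply Rabs_pos | lra]. }
  destruct (Rpower_exp_toinf (2 + (pu + pv)) (2 * sqrt g - th) ltac:(lra) (e / (A + 1)) ltac:(apply Rdiv_lt_0_compat; lra)) as [Re HRe].
  set (R1 := Rmax 1 (Rmax R0 (Rmax Rs (Rmax Ry (Rmax Rv Re))))).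
  assert (HR1 : 1 <= R1 /\ R0 <= R1 /\ Rs <= R1 /\ Ry <= R1 /\ Rv <= R1 /\ Re <= R1).
  { unfold R1. repeat split; rmax. }
  exists R1. split; [lra|]. intros t Ht.
  assert (Ht1 : 0 < t) by lra.
  specialize (Hu t ltac:(lra)). specialize (Hv t ltac:(lra)). specialize (Hs t ltac:(lra)).
  specialize (Hy t ltac:(lra)). specialize (HRv t ltac:(lra)). specialize (HRe t ltac:(lra)).
  assert (Hexp : 0 < exp (- th * t)) by apply exp_pos.
  assert (Hty : 0 < Rabs (t * y t)) by nra.
  assert (Hy0 : y t <> 0).
  { intros H0. rewrite H0, Rmult_0_r, Rabs_R0 in Hty. lra. }
  assert (Habs := Ff_abs c g u v y s t Ht1 ltac:(lra) Hg Hy0).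
  assert (Hpv : 0 < Rpower t pv) by apply Rpower_pos.
  assert (Hpu : 0 < Rpower t pu) by apply Rpower_pos.
  assert (He1 : 0 < exp (- sqrt g * t)) by apply exp_pos.
  assert (HCv : Cv <= Rabs Cv) by apply Rle_abs.
  assert (HCu : Cu <= Rabs Cu) by apply Rle_abs.
  assert (HCv0 : 0 <= Rabs Cv) by apply Rabs_pos.
  assert (HCu0 : 0 <= Rabs Cu) by apply Rabs_pos.
  assert (Hv' : Rabs (v t) <= Rabs Cv * (Rpower t pv * exp (- sqrt g * t))).
  { eapply Rle_trans; [exact Hv|]. rewrite Rmult_assoc. apply Rmult_le_compat_r; [|auto].
    apply Rmult_le_pos; lra. }
  assert (Hu' : Rabs (u t) <= Rabs Cu * (Rpower t pu * exp (- sqrt g * t))).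
  { eapply Rle_trans; [exact Hu|]. rewrite Rmult_assoc. apply Rmult_le_compat_r; [|auto].
    apply Rmult_le_pos; lra. }
  assert (Hv1 : Rabs (v t) <= 1).
  { eapply Rle_trans; [exact Hv'|].
    assert (Rpower t pv * exp (- sqrt g * t) <= 1 / (Rabs Cv + 1)) by lra.
    apply Rle_trans with ((Rabs Cv + 1) * (1 / (Rabs Cv + 1))).
    - apply Rmult_le_compat; try lra. apply Rmult_le_pos; lra.
    - right. field. lra. }
  assert (HQ : g / 2 * s t ^ 2 + c * (2 * v t ^ 2) <= Qm).
  { unfold Qm. assert (s t ^ 2 <= 9/4).
    { rewrite <- (Rabs_pos_eq (s t ^ 2)) by apply pow2_ge_0. rewrite <- RPow_abs.
      assert (0 <= Rabs (s t)) by apply Rabs_pos. simpl. nra. }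
    assert (v t ^ 2 <= 1).
    { rewrite <- (Rabs_pos_eq (v t ^ 2)) by apply pow2_ge_0. rewrite <- RPow_abs.
      assert (0 <= Rabs (v t)) by apply Rabs_pos. simpl. nra. }
    assert (0 <= v t ^ 2) by apply pow2_ge_0. assert (0 <= s t ^ 2) by apply pow2_ge_0.
    assert (c * (2 * v t ^ 2) <= 2) by nra. nra. }
  assert (HQ0 : 0 <= g / 2 * s t ^ 2 + c * (2 * v t ^ 2)).
  { assert (0 <= s t ^ 2) by apply pow2_ge_0. assert (0 <= v t ^ 2) by apply pow2_ge_0.
    apply Rplus_le_le_0_compat; apply Rmult_le_pos; lra. }
  assert (Hmain : Rabs (Ff c g u v y s t) * (kap * exp (- th * t)) <=
     t ^ 2 * (Rabs Cu * Rabs Cv * (Rpower t (pu + pv) * exp (- (2 * sqrt g) * t))) * Qm).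
  { apply Rle_trans with (Rabs (Ff c g u v y s t) * Rabs (t * y t)).
    { apply Rmult_le_compat_l; [apply Rabs_pos | auto]. }
    rewrite Habs.
    assert (Huv : Rabs (u t) * Rabs (v t) <= Rabs Cu * Rabs Cv * (Rpower t (pu + pv) * exp (- (2 * sqrt g) * t))).
    { replace (Rabs Cu * Rabs Cv * (Rpower t (pu + pv) * exp (- (2 * sqrt g) * t))) with
        ((Rabs Cu * (Rpower t pu * exp (- sqrt g * t))) * (Rabs Cv * (Rpower t pv * exp (- sqrt g * t)))).
      - apply Rmult_le_compat; try apply Rabs_pos; auto.
      - rewrite Rpower_plus. replace (- (2 * sqrt g) * t) with (- sqrt g * t + - sqrt g * t) by ring.
        rewrite exp_plus. ring. }
    assert (0 <= Rabs (u t) * Rabs (v t)) by (apply Rmult_le_pos; apply Rabs_pos).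
    assert (0 <= t ^ 2) by apply pow2_ge_0.
    apply Rmult_le_compat; auto.
    - apply Rmult_le_pos; auto.
    - apply Rmult_le_compat_l; auto. }
  assert (Hfin : t ^ 2 * (Rabs Cu * Rabs Cv * (Rpower t (pu + pv) * exp (- (2 * sqrt g) * t))) * Qm
     = (A * kap) * (exp (- th * t)) * (Rpower t (2 + (pu + pv)) * exp (- (2 * sqrt g - th) * t))).
  { unfold A. rewrite (Rpower_plus 2 (pu + pv) t).
    assert (Hp2 : Rpower t 2 = t ^ 2) by (replace 2 with (INR 2) by (simpl; ring); apply Rpower_pow; lra).
    rewrite Hp2.
    replace (- (2 * sqrt g) * t) with (- th * t + - (2 * sqrt g - th) * t) by ring.
    rewrite exp_plus. field. lra. }
  rewrite Hfin in Hmain.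
  assert (Hk2 : 0 < kap * exp (- th * t)) by nra.
  assert (Rabs (Ff c g u v y s t) <= A * (Rpower t (2 + (pu + pv)) * exp (- (2 * sqrt g - th) * t))).
  { apply (Rmult_le_reg_r (kap * exp (- th * t))); auto.
    replace (A * (Rpower t (2 + (pu + pv)) * exp (- (2 * sqrt g - th) * t)) * (kap * exp (- th * t)))
      with (A * kap * exp (- th * t) * (Rpower t (2 + (pu + pv)) * exp (- (2 * sqrt g - th) * t))) by ring.
    auto. }
  assert (0 < Rpower t (2 + (pu + pv)) * exp (- (2 * sqrt g - th) * t)) by (apply Rmult_lt_0_compat; [apply Rpower_pos | apply exp_pos]).
  apply Rle_lt_trans with ((A + 1) * (Rpower t (2 + (pu + pv)) * exp (- (2 * sqrt g - th) * t))); [nra|].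
  apply (Rmult_lt_compat_l (A + 1)) in HRe; [|lra].
  replace ((A + 1) * (e / (A + 1))) with e in HRe by (field; lra). lra.
Qed.


Lemma Rpower_sq t a : 0 < t -> Rpower t a ^ 2 = Rpower t (2 * a).
Proof. intros Ht. simpl. rewrite Rmult_1_r, <- Rpower_plus. f_equal. ring. Qed.

Lemma Rpower_2 t : 0 < t -> Rpower t 2 = t ^ 2.
Proof. intros Ht. replace 2 with (INR 2) by (simpl; ring). apply Rpower_pow; auto. Qed.

Lemma F_zero_bound (c g : R) (u v y s : R -> R) (n : nat) k u0 v0 Cs rho j d0 :
  0 <= c -> 0 < g -> 0 < rho -> 0 < d0 ->
  (forall t, 0 < t < d0 -> Rabs (u t) <= 2 * Rabs u0 * Rpower t k) ->
  (forall t, 0 < t < d0 -> Rabs (v t) <= 2 * Rabs v0 * Rpower t k) ->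
  (forall t, 0 < t < d0 -> Rabs (s t) <= Cs * t ^ n) ->
  (forall t, 0 < t < d0 -> rho * Rpower t j <= Rabs (t * y t)) ->
  forall t, 0 < t < d0 -> Rabs (Ff c g u v y s t) <=
    (4 * Rabs u0 * Rabs v0 * (g / 2) * Cs ^ 2 / rho) * Rpower t (2 - j + 2 * k + 2 * INR n)
    + (32 * c * Rabs u0 * Rabs v0 * v0 ^ 2 / rho) * Rpower t (2 - j + 4 * k).
Proof.
  intros Hc Hg Hrho Hd0 Hu Hv Hs Hy t Ht.
  specialize (Hu t Ht). specialize (Hv t Ht). specialize (Hs t Ht). specialize (Hy t Ht).
  assert (Hpj : 0 < Rpower t j) by apply Rpower_pos.
  assert (Hpk : 0 < Rpower t k) by apply Rpower_pos.
  assert (Hty : 0 < Rabs (t * y t)) by nra.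
  assert (Hy0 : y t <> 0) by (intros H0; rewrite H0, Rmult_0_r, Rabs_R0 in Hty; lra).
  assert (Habs := Ff_abs c g u v y s t ltac:(lra) Hc Hg Hy0).
  assert (Hu0 : 0 <= Rabs u0) by apply Rabs_pos. assert (Hv0 : 0 <= Rabs v0) by apply Rabs_pos.
  assert (Hs2 : s t ^ 2 <= Cs ^ 2 * Rpower t (2 * INR n)).
  { rewrite <- (Rabs_pos_eq (s t ^ 2)) by apply pow2_ge_0. rewrite <- RPow_abs.
    replace (Rpower t (2 * INR n)) with ((t ^ n) ^ 2) by (rewrite <- (Rpower_pow n t) by lra; apply Rpower_sq; lra).
    assert (0 <= Rabs (s t)) by apply Rabs_pos. rewrite <- Rpow_mult_distr.
    apply pow_incr. split; auto. }
  assert (Hv2 : v t ^ 2 <= 4 * v0 ^ 2 * Rpower t (2 * k)).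
  { rewrite <- (Rabs_pos_eq (v t ^ 2)) by apply pow2_ge_0. rewrite <- RPow_abs.
    rewrite <- Rpower_sq by lra.
    assert (0 <= Rabs (v t)) by apply Rabs_pos.
    replace (4 * v0 ^ 2 * Rpower t k ^ 2) with ((2 * Rabs v0 * Rpower t k) ^ 2)
      by (rewrite <- (Rabs_pos_eq (v0 ^ 2)) by apply pow2_ge_0; rewrite <- RPow_abs; simpl; ring).
    apply pow_incr. split; auto. }
  assert (HQ : g / 2 * s t ^ 2 + c * (2 * v t ^ 2) <= g / 2 * (Cs ^ 2 * Rpower t (2 * INR n)) + c * (2 * (4 * v0 ^ 2 * Rpower t (2 * k)))).
  { apply Rplus_le_compat; apply Rmult_le_compat_l; lra. }
  assert (HQ0 : 0 <= g / 2 * s t ^ 2 + c * (2 * v t ^ 2)).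
  { assert (0 <= s t ^ 2) by apply pow2_ge_0. assert (0 <= v t ^ 2) by apply pow2_ge_0.
    apply Rplus_le_le_0_compat; apply Rmult_le_pos; lra. }
  assert (Huv : Rabs (u t) * Rabs (v t) <= 4 * Rabs u0 * Rabs v0 * Rpower t (2 * k)).
  { replace (Rpower t (2 * k)) with (Rpower t k ^ 2) by (apply Rpower_sq; lra).
    replace (4 * Rabs u0 * Rabs v0 * Rpower t k ^ 2) with ((2 * Rabs u0 * Rpower t k) * (2 * Rabs v0 * Rpower t k)) by ring.
    apply Rmult_le_compat; try apply Rabs_pos; auto. }
  assert (Hmain : Rabs (Ff c g u v y s t) * (rho * Rpower t j) <=
    t ^ 2 * (4 * Rabs u0 * Rabs v0 * Rpower t (2 * k)) *
      (g / 2 * (Cs ^ 2 * Rpower t (2 * INR n)) + c * (2 * (4 * v0 ^ 2 * Rpower t (2 * k))))).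
  { apply Rle_trans with (Rabs (Ff c g u v y s t) * Rabs (t * y t)).
    { apply Rmult_le_compat_l; [apply Rabs_pos | auto]. }
    rewrite Habs.
    assert (0 <= Rabs (u t) * Rabs (v t)) by (apply Rmult_le_pos; apply Rabs_pos).
    assert (0 <= t ^ 2) by apply pow2_ge_0.
    apply Rmult_le_compat; auto.
    - apply Rmult_le_pos; auto.
    - apply Rmult_le_compat_l; auto. }
  apply (Rmult_le_reg_r (rho * Rpower t j)); [nra|].
  eapply Rle_trans; [exact Hmain|]. right.
  rewrite <- Rpower_2 by lra.
  assert (E1 : Rpower t (2 - j + 2 * k + 2 * INR n) * Rpower t j = Rpower t 2 * Rpower t (2 * k) * Rpower t (2 * INR n)).
  { rewrite <- !Rpower_plus. f_equal. ring. }
  assert (E2 : Rpower t (2 - j + 4 * k) * Rpower t j = Rpower t 2 * Rpower t (2 * k) * Rpower t (2 * k)).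
  { rewrite <- !Rpower_plus. f_equal. ring. }
  apply (Rmult_eq_reg_r (/ rho)); [| apply Rinv_neq_0_compat; lra].
  replace ((4 * Rabs u0 * Rabs v0 * (g / 2) * Cs ^ 2 / rho * Rpower t (2 - j + 2 * k + 2 * INR n) +
     32 * c * Rabs u0 * Rabs v0 * v0 ^ 2 / rho * Rpower t (2 - j + 4 * k)) * (rho * Rpower t j) * / rho)
   with ((4 * Rabs u0 * Rabs v0 * (g / 2) * Cs ^ 2) * (Rpower t (2 - j + 2 * k + 2 * INR n) * Rpower t j) / rho +
     (32 * c * Rabs u0 * Rabs v0 * v0 ^ 2) * (Rpower t (2 - j + 4 * k) * Rpower t j) / rho) by (field; lra).
  rewrite E1, E2. field. lra.
Qed.


Lemma special_case (F Fd u v y : R -> R) k u0 v0 Cy A d0 :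
  k <= 0 -> u0 <> 0 -> v0 <> 0 -> 0 < d0 <= 1 -> 0 < Cy -> 0 <= A ->
  (forall t, 0 < t < d0 -> Rabs u0 / 2 * Rpower t k <= Rabs (u t)) ->
  (forall t, 0 < t < d0 -> Rabs v0 / 2 * Rpower t k <= Rabs (v t)) ->
  (forall t, 0 < t < d0 -> Rabs (t * y t) <= Cy * t ^ 2) ->
  (forall t, 0 < t < d0 -> Rabs (F t) <= A * Rpower t (4 * k)) ->
  (forall t, 0 < t -> F t <= 0) ->
  (forall t, 0 < t -> is_derive F t (Fd t)) ->
  (forall t, 0 < t -> y t <> 0 -> 4 * t * u t ^ 2 * v t ^ 4 / y t ^ 2 <= Fd t) ->
  (forall t, 0 < t -> y t <> 0) ->
  False.
Proof.
  intros Hk Hu0 Hv0 Hd0 HCy HA Hu Hv Hy HF HFle HFd HFdb Hy0.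
  set (kap := u0 ^ 2 * v0 ^ 4 / (16 * Cy ^ 2)).
  assert (Hkap : 0 < kap).
  { unfold kap. apply Rdiv_lt_0_compat; [apply Rmult_lt_0_compat | apply Rmult_lt_0_compat; [lra | apply pow_lt; lra]].
    - apply pow2_gt_0; auto. 
    - replace (v0 ^ 4) with ((v0 ^ 2) ^ 2) by ring. apply pow2_gt_0. apply pow_nonzero. auto. }
  set (G := fun t => exp (4 * k * ln t) * ln t).
  set (G' := fun t => exp (4 * k * ln t) * (4 * k * ln t + 1) / t).
  assert (HG : forall t, 0 < t -> is_derive G t (G' t)).
  { intros t Ht. unfold G, G'. auto_derive; [auto | field; lra]. }
  assert (HFd2 : forall t, 0 < t < d0 -> kap / 2 * G' t <= Fd t).
  { intros t Ht. specialize (HFdb t ltac:(lra) (Hy0 t ltac:(lra))).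
    assert (Hpk : 0 < Rpower t k) by apply Rpower_pos.
    assert (Hu2 : u0 ^ 2 / 4 * Rpower t (2 * k) <= u t ^ 2).
    { rewrite <- Rpower_sq by lra. specialize (Hu t Ht).
      rewrite <- (Rabs_pos_eq (u t ^ 2)) by apply pow2_ge_0. rewrite <- RPow_abs.
      replace (u0 ^ 2 / 4 * Rpower t k ^ 2) with ((Rabs u0 / 2 * Rpower t k) ^ 2)
        by (rewrite <- (Rabs_pos_eq (u0 ^ 2)) by apply pow2_ge_0; rewrite <- RPow_abs; simpl; field).
      apply pow_incr. split; auto. assert (0 <= Rabs u0) by apply Rabs_pos. 
      apply Rmult_le_pos; lra. }
    assert (Hv4 : v0 ^ 4 / 16 * Rpower t (4 * k) <= v t ^ 4).
    { replace (4 * k) with (2 * (2 * k)) by ring. rewrite <- !Rpower_sq by lra. specialize (Hv t Ht).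
      rewrite <- (Rabs_pos_eq (v t ^ 4)) by (replace (v t ^ 4) with ((v t ^ 2) ^ 2) by ring; apply pow2_ge_0).
      rewrite <- RPow_abs.
      replace (v0 ^ 4 / 16 * (Rpower t k ^ 2) ^ 2) with ((Rabs v0 / 2 * Rpower t k) ^ 4)
        by (rewrite <- (Rabs_pos_eq (v0 ^ 4)) by (replace (v0 ^ 4) with ((v0 ^ 2) ^ 2) by ring; apply pow2_ge_0);
            rewrite <- RPow_abs; simpl; field).
      apply pow_incr. split; auto. assert (0 <= Rabs v0) by apply Rabs_pos. 
      apply Rmult_le_pos; lra. }
    assert (Hyy : y t ^ 2 <= Cy ^ 2 * t ^ 2).
    { specialize (Hy t Ht). rewrite Rabs_mult, (Rabs_pos_eq t) in Hy by lra.
      assert (Rabs (y t) <= Cy * t).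
      { apply (Rmult_le_reg_l t); [lra|]. nra. }
      rewrite <- (Rabs_pos_eq (y t ^ 2)) by apply pow2_ge_0. rewrite <- RPow_abs.
      replace (Cy ^ 2 * t ^ 2) with ((Cy * t) ^ 2) by ring. apply pow_incr. split; auto; apply Rabs_pos. }
    assert (Hy2 : 0 < y t ^ 2) by (apply pow2_gt_0; apply Hy0; lra).
    assert (Hp2 : 0 < Rpower t (2 * k)) by apply Rpower_pos.
    assert (Hp4 : 0 < Rpower t (4 * k)) by apply Rpower_pos.
    assert (Hlow : kap * (Rpower t (2 * k) * Rpower t (4 * k)) / t <= 4 * t * u t ^ 2 * v t ^ 4 / y t ^ 2).
    { unfold kap.
      assert (HN : 0 <= u0 ^ 2 / 4 * Rpower t (2 * k) * (v0 ^ 4 / 16 * Rpower t (4 * k))).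
      { apply Rmult_le_pos; apply Rmult_le_pos; try lra; unfold Rdiv; apply Rmult_le_pos; try lra.
        apply pow2_ge_0. replace (v0 ^ 4) with ((v0 ^ 2) ^ 2) by ring; apply pow2_ge_0. }
      assert (HM : u0 ^ 2 / 4 * Rpower t (2 * k) * (v0 ^ 4 / 16 * Rpower t (4 * k)) <= u t ^ 2 * v t ^ 4).
      { apply Rmult_le_compat; auto. apply Rmult_le_pos; [apply Rmult_le_pos|]; try lra; apply pow2_ge_0.
        apply Rmult_le_pos; try lra. unfold Rdiv; apply Rmult_le_pos; try lra.
        replace (v0 ^ 4) with ((v0 ^ 2) ^ 2) by ring; apply pow2_ge_0. }
      set (N := u0 ^ 2 / 4 * Rpower t (2 * k) * (v0 ^ 4 / 16 * Rpower t (4 * k))) in *.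
      assert (E : u0 ^ 2 * v0 ^ 4 / (16 * Cy ^ 2) * (Rpower t (2 * k) * Rpower t (4 * k)) / t = 4 * t * N / (Cy ^ 2 * t ^ 2)).
      { unfold N. field. split; lra. }
      rewrite E.
      assert (S1 : 4 * t * N / (Cy ^ 2 * t ^ 2) <= 4 * t * N / y t ^ 2).
      { unfold Rdiv. apply Rmult_le_compat_l; [apply Rmult_le_pos; lra|]. apply Rinv_le_contravar; auto. }
      assert (S2 : 4 * t * N / y t ^ 2 <= 4 * t * (u t ^ 2 * v t ^ 4) / y t ^ 2).
      { unfold Rdiv. apply Rmult_le_compat_r; [left; apply Rinv_0_lt_compat; auto|]. apply Rmult_le_compat_l; lra. }
      replace (4 * t * u t ^ 2 * v t ^ 4 / y t ^ 2) with (4 * t * (u t ^ 2 * v t ^ 4) / y t ^ 2) by (field; apply Hy0; lra).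
      lra. }
    assert (Hcmp : G' t <= 2 * (Rpower t (2 * k) * Rpower t (4 * k)) / t).
    { unfold G'. unfold Rdiv. apply Rmult_le_compat_r; [left; apply Rinv_0_lt_compat; lra|].
      unfold Rpower.
      assert (Hx := exp_ineq1_le (2 * k * ln t)).
      replace (exp (2 * k * ln t) * exp (4 * k * ln t)) with (exp (4 * k * ln t) * exp (2 * k * ln t)) by ring.
      assert (0 < exp (4 * k * ln t)) by apply exp_pos. nra. }
    assert (kap / 2 * G' t <= kap * (Rpower t (2 * k) * Rpower t (4 * k)) / t).
    { apply Rle_trans with (kap / 2 * (2 * (Rpower t (2 * k) * Rpower t (4 * k)) / t)).
      - apply Rmult_le_compat_l; lra.
      - right. field. lra. }
    lra. }
  set (r0 := d0 / 2).
  set (X := 2 / kap * (A + 1 + kap / 2 * Rabs (G r0))).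
  set (e := Rmin (r0 / 2) (exp (- X))).
  assert (He : 0 < e /\ e <= r0 / 2 /\ e <= exp (- X)).
  { unfold e. split; [apply Rmin_glb_lt; [unfold r0; lra | apply exp_pos] | split; [apply Rmin_l | apply Rmin_r]]. }
  assert (Hlne : ln e <= - X).
  { rewrite <- (ln_exp (- X)). apply ln_le; lra. }
  assert (HX : 0 <= X).
  { unfold X. apply Rmult_le_pos; [apply Rdiv_le_0_compat; lra|].
    assert (0 <= Rabs (G r0)) by apply Rabs_pos. assert (0 <= kap / 2 * Rabs (G r0)) by (apply Rmult_le_pos; lra). lra. }
  assert (Hmon : F e - kap / 2 * G e <= F r0 - kap / 2 * G r0).
  { apply (mono_le (fun t => F t - kap / 2 * G t) (fun t => Fd t - kap / 2 * G' t)); [unfold r0 in *; lra | |].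
    - intros t Ht. apply isd_minus; [apply HFd; lra|]. apply is_derive_scal. apply HG. lra.
    - intros t Ht. specialize (HFd2 t ltac:(unfold r0 in *; lra)). lra. }
  assert (HFe : - (A * Rpower e (4 * k)) <= F e).
  { specialize (HF e ltac:(unfold r0 in *; lra)). apply Rabs_def2 in HF || (unfold Rabs in HF; destruct (Rcase_abs (F e))); lra. }
  assert (HGe : G e = Rpower e (4 * k) * ln e) by (unfold G, Rpower; auto).
  assert (Hpe : 1 <= Rpower e (4 * k)).
  { unfold Rpower. rewrite <- exp_0. 
    assert (ln e <= 0) by lra.
    destruct (Req_dec (4 * k * ln e) 0) as [Hz|Hz]; [rewrite Hz; lra|].
    left. apply exp_increasing. nra. }
  assert (HFr0 : F r0 <= 0) by (apply HFle; unfold r0; lra).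
  assert (HGr : - Rabs (G r0) <= G r0) by (unfold Rabs; destruct (Rcase_abs (G r0)); lra).
  assert (Hkey : F r0 >= kap / 2 * G r0 + Rpower e (4 * k) * (kap / 2 * (- ln e) - A)) by (rewrite HGe in Hmon; nra).
  assert (Hb : kap / 2 * (- ln e) - A >= 1 + kap / 2 * Rabs (G r0)).
  { assert (kap / 2 * X = A + 1 + kap / 2 * Rabs (G r0)) by (unfold X; field; lra).
    assert (kap / 2 * (- ln e) >= kap / 2 * X) by (apply Rle_ge, Rmult_le_compat_l; lra). lra. }
  assert (0 <= kap / 2 * Rabs (G r0)) by (apply Rmult_le_pos; [lra | apply Rabs_pos]).
  assert (Rpower e (4 * k) * (kap / 2 * (- ln e) - A) >= 1 + kap / 2 * Rabs (G r0)) by nra.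
  nra.
Qed.


Lemma sign_facts n m beta gamma s z : (1 <= n)%nat -> NO_profile n beta s z -> 0 < gamma -> gamma <= 1 ->
  (1 <= IZR m \/ IZR m = 0 \/ IZR m <= -2 * INR n) ->
  forall t, 0 < t -> aux_y gamma n m z t <> 0 /\ 0 <= (aux_y gamma n m z t - z t) * aux_y gamma n m z t /\
    (IZR m = 0 -> 0 < (aux_y gamma n m z t - z t) * aux_y gamma n m z t).
Proof.
  intros Hn HNO Hg Hg1 Hcase t Ht.
  assert (Hn1 : 1 <= INR n) by (apply (le_INR 1); auto).
  assert (Hb := az_bounds n beta s z Hn HNO t Ht).
  assert (Hp := az_pos n beta s z Hn HNO t Ht).
  assert (E1 := ty gamma n m z t Ht). assert (E2 := txy gamma n m z t Ht).
  set (Y := aux_y gamma n m z t) in *.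
  assert (Hprod : (Y - z t) * Y = (t * (Y - z t)) * (t * Y) / t ^ 2) by (field; lra).
  assert (Ht2 : 0 < t ^ 2) by (apply pow_lt; lra).
  unfold KK in *.
  destruct Hcase as [HA | [HB | HC]].
  - assert (HtY : t * Y <= - 1 / 2) by nra.
    assert (HtX : t * (Y - z t) < 0) by nra.
    split; [intros H0; rewrite H0 in HtY; lra|].
    assert (0 < (t * (Y - z t)) * (t * Y)) by nra.
    split; [rewrite Hprod; left; apply Rdiv_lt_0_compat; auto | intros; lra].
  - destruct (az_m0 n beta s z Hn HNO) as [Hlt _]. specialize (Hlt t Ht).
    rewrite HB in *.
    assert (HtY : t * Y < 0) by nra.
    assert (HtX : t * (Y - z t) < 0) by nra.
    split; [intros H0; rewrite H0 in HtY; lra|].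
    assert (0 < (t * (Y - z t)) * (t * Y)) by nra.
    split; rewrite Hprod; [left|intros]; apply Rdiv_lt_0_compat; auto.
  - assert (HtY : 0 < t * Y) by nra.
    assert (HtX : 0 <= t * (Y - z t)) by nra.
    split; [intros H0; rewrite H0 in HtY; lra|].
    assert (0 <= (t * (Y - z t)) * (t * Y)) by nra.
    split; [rewrite Hprod; apply Rdiv_le_0_compat; auto | intros; lra].
Qed.

Lemma ty_inf n m beta gamma s z : (1 <= n)%nat -> NO_profile n beta s z -> 0 < gamma -> gamma <= 1 ->
  (1 <= IZR m \/ IZR m = 0 \/ IZR m <= -2 * INR n) ->
  exists kap th Ry, 0 < kap /\ 0 <= th < 2 * sqrt gamma /\ 0 < Ry /\
    forall t, Ry <= t -> kap * exp (- th * t) <= Rabs (t * aux_y gamma n m z t).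
Proof.
  intros Hn HNO Hg Hg1 Hcase.
  assert (Hn1 : 1 <= INR n) by (apply (le_INR 1); auto).
  assert (Hsg : 0 < sqrt gamma) by (apply sqrt_lt_R0; lra).
  assert (Hb := az_bounds n beta s z Hn HNO).
  assert (Hp := az_pos n beta s z Hn HNO).
  assert (HNO' := HNO). destruct HNO' as [_ [_ [_ [_ [_ [_ [_ Hzinf]]]]]]].
  destruct Hcase as [HA | [HB | HC]].
  - exists (1/2), 0, 1. repeat split; try lra.
    intros t Ht. rewrite ty by lra. unfold KK. specialize (Hb t ltac:(lra)).
    replace (- 0 * t) with 0 by ring. rewrite exp_0.
    assert (gamma * az z t - (2 * gamma * INR n + IZR m) / 2 <= - 1 / 2) by nra.
    rewrite Rabs_left by lra. lra.
  - destruct (az_inf z Hzinf (INR n / 2) ltac:(lra)) as [R1 [HR1 HR1']].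
    exists (gamma * INR n / 2), 0, R1. repeat split; try lra.
    { apply Rmult_lt_0_compat; [apply Rmult_lt_0_compat|]; lra. }
    intros t Ht. rewrite ty by lra. unfold KK. specialize (HR1' t Ht). apply Rabs_def2 in HR1'.
    replace (- 0 * t) with 0 by ring. rewrite exp_0. rewrite HB.
    assert (gamma * az z t - (2 * gamma * INR n + 0) / 2 <= - (gamma * INR n / 2)) by nra.
    rewrite Rabs_left by (assert (0 < gamma * INR n) by nra; lra). lra.
  - destruct (Rlt_dec (2 * gamma * INR n + IZR m) 0) as [HK|HK].
    + exists (- (2 * gamma * INR n + IZR m) / 2), 0, 1. repeat split; try lra.
      intros t Ht. rewrite ty by lra. unfold KK. specialize (Hp t ltac:(lra)).
      replace (- 0 * t) with 0 by ring. rewrite exp_0.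
      rewrite Rabs_right by nra. nra.
    + assert (Hg1' : gamma = 1) by nra.
      destruct (az_edge_lb n beta s z Hn HNO) as [c0 [R1 [Hc0 [HR1 HR1']]]].
      exists (gamma * c0), (3/2), R1. repeat split; try lra.
      * apply Rmult_lt_0_compat; lra.
      * rewrite Hg1', sqrt_1. lra.
      * intros t Ht. rewrite ty by lra. unfold KK. specialize (HR1' t Ht). specialize (Hp t ltac:(lra)).
        assert (HK0 : 2 * gamma * INR n + IZR m = 0) by nra.
        rewrite HK0. replace (gamma * az z t - 0 / 2) with (gamma * az z t) by field.
        rewrite Rabs_right by nra. rewrite Rmult_assoc. apply Rmult_le_compat_l; lra.
Qed.

Lemma ty_zero_m n m beta gamma s z : NO_profile n beta s z -> 0 < gamma -> IZR m <> 0 ->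
  exists d, 0 < d /\ forall t, 0 < t < d -> 1 / 4 * Rpower t 0 <= Rabs (t * aux_y gamma n m z t).
Proof.
  intros HNO Hg Hm.
  assert (Hm1 : 1 <= Rabs (IZR m)).
  { rewrite <- abs_IZR. apply IZR_le. destruct (Z.eq_dec m 0) as [->|]; [exfalso; apply Hm; auto | lia]. }
  destruct (az_zero _ _ _ _ HNO) as [C [d [Hd H0]]].
  set (d' := Rmin d (Rmin 1 (/ (4 * gamma * (Rabs C + 1))))).
  assert (Hd' : 0 < d' /\ d' <= d /\ d' <= 1 /\ d' <= / (4 * gamma * (Rabs C + 1))).
  { unfold d'. assert (0 <= Rabs C) by apply Rabs_pos.
    repeat split; try rmax.
    - repeat apply Rmin_glb_lt; try lra. apply Rinv_0_lt_compat. nra.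
    - apply Rmin_l.
    - eapply Rle_trans; [apply Rmin_r | apply Rmin_l].
    - eapply Rle_trans; [apply Rmin_r | apply Rmin_r]. }
  exists d'. split; [lra|]. intros t Ht.
  rewrite Rpower_O by lra. rewrite Rmult_1_r.
  rewrite ty by lra. unfold KK.
  specialize (H0 t ltac:(lra)).
  assert (HC : 0 <= Rabs C) by apply Rabs_pos.
  assert (Ht2 : t ^ 2 <= t) by (simpl; nra).
  assert (HCt : gamma * (C * t ^ 2) <= 1 / 4).
  { assert (C * t ^ 2 <= (Rabs C + 1) * t) by (assert (C <= Rabs C) by apply Rle_abs; assert (0 <= t ^ 2) by apply pow2_ge_0; nra).
    assert (t * (4 * gamma * (Rabs C + 1)) <= 1).
    { destruct Hd' as [_ [_ [_ H4]]]. apply (Rmult_le_compat_r (4 * gamma * (Rabs C + 1))) in H4; [|nra].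
      rewrite Rinv_l in H4 by nra. nra. }
    nra. }
  replace (gamma * az z t - (2 * gamma * INR n + IZR m) / 2) with (gamma * (az z t - INR n) - IZR m / 2) by field.
  assert (Habs : Rabs (gamma * (az z t - INR n)) <= gamma * (C * t ^ 2)).
  { rewrite Rabs_mult, Rabs_pos_eq by lra. apply Rmult_le_compat_l; lra. }
  assert (Rabs (IZR m / 2) = Rabs (IZR m) / 2) by (unfold Rdiv; rewrite Rabs_mult, (Rabs_pos_eq (/ 2)) by lra; auto).
  assert (Hrt := Rabs_triang_inv (IZR m / 2) (gamma * (az z t - INR n))).
  replace (gamma * (az z t - INR n) - IZR m / 2) with (- (IZR m / 2 - gamma * (az z t - INR n))) by ring.
  rewrite Rabs_Ropp. lra.
Qed.

Lemma ty_zero_0 n m beta gamma s z : (1 <= n)%nat -> NO_profile n beta s z -> 0 < gamma -> IZR m = 0 ->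
  exists rho Cy d, 0 < rho /\ 0 < Cy /\ 0 < d /\ forall t, 0 < t < d ->
    rho * Rpower t 2 <= Rabs (t * aux_y gamma n m z t) /\ Rabs (t * aux_y gamma n m z t) <= Cy * t ^ 2.
Proof.
  intros Hn HNO Hg Hm.
  destruct (az_m0 n beta s z Hn HNO) as [_ [c [d [Hc [Hd Hcd]]]]].
  destruct (az_zero _ _ _ _ HNO) as [C [d2 [Hd2 H0]]].
  exists (gamma * c), (gamma * (Rabs C + 1)), (Rmin d d2).
  assert (HC : 0 <= Rabs C) by apply Rabs_pos.
  split; [apply Rmult_lt_0_compat; lra|]. split; [apply Rmult_lt_0_compat; lra|].
  split; [apply Rmin_glb_lt; lra|]. intros t Ht. split.
  - assert (t < d) by (eapply Rlt_le_trans; [apply Ht | apply Rmin_l]).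
    rewrite Rpower_2 by lra. rewrite ty by lra. unfold KK. rewrite Hm.
    specialize (Hcd t ltac:(lra)).
    replace (gamma * az z t - (2 * gamma * INR n + 0) / 2) with (- (gamma * (INR n - az z t))) by field.
    rewrite Rabs_Ropp. rewrite Rabs_pos_eq by (assert (0 <= c * t ^ 2) by (apply Rmult_le_pos; [lra | apply pow2_ge_0]); nra).
    rewrite Rmult_assoc. apply Rmult_le_compat_l; lra.
  - assert (t < d2) by (eapply Rlt_le_trans; [apply Ht | apply Rmin_r]).
    rewrite ty by lra. unfold KK. rewrite Hm.
    specialize (H0 t ltac:(lra)).
    replace (gamma * az z t - (2 * gamma * INR n + 0) / 2) with (gamma * (az z t - INR n)) by field.
    rewrite Rabs_mult, (Rabs_pos_eq gamma) by lra. rewrite Rmult_assoc. apply Rmult_le_compat_l; [lra|].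
    assert (C <= Rabs C) by apply Rle_abs. assert (0 <= t ^ 2) by apply pow2_ge_0. nra.
Qed.


Lemma Fdv_lb (g t u v y s zt : R) : 0 < t -> 0 < g -> y <> 0 -> 0 <= (y - zt) * y ->
  4 * t * u ^ 2 * v ^ 4 / y ^ 2 <= Fdv 1 g t u v y s zt.
Proof.
  intros Ht Hg Hy Hxy. rewrite Fdv_parts by auto.
  assert (Hy2 : 0 < y ^ 2) by (apply pow2_gt_0; auto).
  assert (Hiy : 0 < / y ^ 2) by (apply Rinv_0_lt_compat; lra).
  assert (Hs2 : 0 <= s ^ 2) by apply pow2_ge_0. assert (Hv2 : 0 <= v ^ 2) by apply pow2_ge_0.
  assert (Hu2 : 0 <= u ^ 2) by apply pow2_ge_0.
  set (Q := g / 2 * s ^ 2 + 1 * (2 * v ^ 2)).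
  assert (HQ : 2 * v ^ 2 <= Q) by (unfold Q; assert (0 <= g / 2 * s ^ 2) by (apply Rmult_le_pos; lra); lra).
  assert (HP : 2 * v ^ 2 <= 2 * y ^ 2 + Q) by lra.
  assert (HPQ : 4 * v ^ 4 <= (2 * y ^ 2 + Q) * Q).
  { replace (4 * v ^ 4) with ((2 * v ^ 2) * (2 * v ^ 2)) by ring. apply Rmult_le_compat; lra. }
  assert (H4 : 0 <= 4 * 1 * v ^ 2 * y ^ 2) by (apply Rmult_le_pos; [apply Rmult_le_pos|]; lra).
  assert (HB : 0 <= g * t * s ^ 2 * v ^ 2 * ((y - zt) * y) / y ^ 2).
  { unfold Rdiv. apply Rmult_le_pos; [|lra].
    apply Rmult_le_pos; [apply Rmult_le_pos; [apply Rmult_le_pos; [apply Rmult_le_pos|]|]|]; lra. }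
  assert (HA : 4 * t * u ^ 2 * v ^ 4 / y ^ 2 <= t * u ^ 2 * ((2 * y ^ 2 + Q) * Q + 4 * 1 * v ^ 2 * y ^ 2) / y ^ 2).
  { unfold Rdiv. apply Rmult_le_compat_r; [lra|].
    replace (4 * t * u ^ 2 * v ^ 4) with (t * u ^ 2 * (4 * v ^ 4)) by ring.
    apply Rmult_le_compat_l; [apply Rmult_le_pos; lra | lra]. }
  unfold Q in *. lra.
Qed.

Lemma main_contra (c : R) n m beta gamma s z u v :
  (c = 0 \/ c = 1) -> (1 <= n)%nat -> 0 < beta -> 0 < gamma -> gamma <= 1 -> NO_profile n beta s z ->
  C1_pos u -> C2_pos v -> ~ (forall r, 0 < r -> u r = 0 /\ v r = 0) ->
  W_eqs c gamma (aux_y gamma n m z) s u v ->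
  (exists k u0 v0 : R, -(1/2) < k /\ asym0_pow u u0 k /\ asym0_pow v v0 k) ->
  decays_W gamma u -> decays_W gamma v ->
  (1 <= IZR m \/ IZR m = 0 \/ IZR m <= -2 * INR n) -> False.
Proof.
  intros Hc Hn Hbeta Hg Hg1 HNO Hu Hv Hnt HW HBC Hdu Hdv Hcase.
  assert (Hn1 : 1 <= INR n) by (apply (le_INR 1); auto).
  assert (Hc01 : 0 <= c <= 1) by (destruct Hc; subst; lra).
  assert (HNO' := HNO). destruct HNO' as [Hs [Hz _]].
  assert (Hsign := sign_facts n m beta gamma s z Hn HNO Hg Hg1 Hcase).
  set (y := aux_y gamma n m z) in *.
  set (F := Ff c gamma u v y s).
  assert (HFd : forall t, 0 < t -> is_derive F t (Fdv c gamma t (u t) (v t) (y t) (s t) (z t))).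
  { intros t Ht. apply F_deriv; auto.
    - intros w Hw. destruct (Hv w Hw) as [Hv1 Hv2]. destruct (y_ex gamma n m z w Hz Hw) as [Hy1 Hy2].
      destruct (Hsign w Hw) as [Hy0 _]. destruct (HW w Hw) as [_ E2].
      repeat split; auto.
    - destruct (HW t Ht) as [E1 _]. exact E1.
    - apply (y_ode gamma n m beta s z t HNO Ht). }
  assert (Hmono : forall t1 t2, 0 < t1 <= t2 -> F t1 <= F t2).
  { intros t1 t2 Ht. apply (mono_le F (fun t => Fdv c gamma t (u t) (v t) (y t) (s t) (z t))); [lra | |].
    - intros t Htt. apply HFd. lra.
    - intros t Htt. destruct (Hsign t ltac:(lra)) as [Hy0 [Hxy _]]. apply Fdv_nonneg; auto; lra. }
  assert (Hinf : forall e, 0 < e -> exists R0, 0 < R0 /\ forall t, R0 <= t -> Rabs (F t) < e).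
  { destruct Hdu as [Cu [pu [Ru [HRu Hu']]]]. destruct Hdv as [Cv [pv [Rv [HRv Hv']]]].
    destruct (s_inf n beta s z HNO) as [Rs [HRs HRs']].
    destruct (ty_inf n m beta gamma s z Hn HNO Hg Hg1 Hcase) as [kap [th [Ry [Hkap [Hth [HRy HRy']]]]]].
    apply (F_inf c gamma u v y s Cu pu Cv pv (Rmax Ru Rv) Rs Ry kap th); auto.
    - intros t Ht. apply Hu'. eapply Rle_trans; [apply Rmax_l | exact Ht].
    - intros t Ht. apply Hv'. eapply Rle_trans; [apply Rmax_r | exact Ht].
    - intros t Ht. specialize (HRs' t Ht). rewrite Rabs_pos_eq by lra. lra. }
  destruct HBC as [k [u0 [v0 [Hk [Hau Hav]]]]].
  destruct (asym_bound u u0 k Hau) as [du [Hdu0 Hdu']].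
  destruct (asym_bound v v0 k Hav) as [dv [Hdv0 Hdv']].
  destruct (s_zero n beta s z HNO) as [Cs [ds [Hds Hds']]].
  assert (HFle := F_le0 F Hmono Hinf).
  assert (H0lim : forall e, 0 < e -> exists d, 0 < d /\ forall t, 0 < t < d -> Rabs (F t) < e).
  { destruct (Req_dec (IZR m) 0) as [Hm0|Hm0].
    - destruct (ty_zero_0 n m beta gamma s z Hn HNO Hg Hm0) as [rho [Cy [d1 [Hrho [HCy [Hd1 Hd1']]]]]].
      set (d0 := Rmin (Rmin du dv) (Rmin ds d1)).
      assert (Hd0 : 0 < d0 /\ d0 <= du /\ d0 <= dv /\ d0 <= ds /\ d0 <= d1).
      { unfold d0. split; [repeat apply Rmin_glb_lt; lra|].
        repeat split.
        - eapply Rle_trans; [apply Rmin_l | apply Rmin_l].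
        - eapply Rle_trans; [apply Rmin_l | apply Rmin_r].
        - eapply Rle_trans; [apply Rmin_r | apply Rmin_l].
        - eapply Rle_trans; [apply Rmin_r | apply Rmin_r]. }
      assert (Hbd := F_zero_bound c gamma u v y s n k u0 v0 Cs rho 2 d0 ltac:(lra) Hg Hrho ltac:(lra)
        ltac:(intros t Ht; apply Hdu'; lra) ltac:(intros t Ht; apply Hdv'; lra)
        ltac:(intros t Ht; apply Hds'; lra) ltac:(intros t Ht; apply Hd1'; lra)).
      set (c1 := 4 * Rabs u0 * Rabs v0 * (gamma / 2) * Cs ^ 2 / rho) in *.
      set (c2 := 32 * c * Rabs u0 * Rabs v0 * v0 ^ 2 / rho) in *.
      assert (Hc1 : 0 <= c1).
      { unfold c1. unfold Rdiv. apply Rmult_le_pos; [|left; apply Rinv_0_lt_compat; lra].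
        apply Rmult_le_pos; [|apply pow2_ge_0]. apply Rmult_le_pos; [|lra].
        apply Rmult_le_pos; [apply Rmult_le_pos; [lra|apply Rabs_pos] | apply Rabs_pos]. }
      assert (Hc2 : 0 <= c2).
      { unfold c2. unfold Rdiv. apply Rmult_le_pos; [|left; apply Rinv_0_lt_compat; lra].
        apply Rmult_le_pos; [|apply pow2_ge_0].
        apply Rmult_le_pos; [apply Rmult_le_pos; [apply Rmult_le_pos; lra|apply Rabs_pos] | apply Rabs_pos]. }
      assert (He1 : 0 < 2 - 2 + 2 * k + 2 * INR n) by lra.
      assert (Hdec : (0 < 2 - 2 + 4 * k \/ c2 = 0) \/ ~ (0 < 2 - 2 + 4 * k \/ c2 = 0)).
      { destruct (Rlt_dec 0 (2 - 2 + 4 * k)); [left; left; auto|].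
        destruct (Req_dec c2 0); [left; right; auto|]. right. intros [|]; auto. }
      destruct Hdec as [Hcase2|Hcase2].
      + intros e He. destruct (pow_sum_to0 c1 c2 _ _ Hc1 Hc2 He1 Hcase2 e He) as [d [Hd Hd']].
        exists (Rmin d d0). split; [apply Rmin_glb_lt; lra|]. intros t Ht.
        assert (t < d) by (eapply Rlt_le_trans; [apply Ht | apply Rmin_l]).
        assert (t < d0) by (eapply Rlt_le_trans; [apply Ht | apply Rmin_r]).
        eapply Rle_lt_trans; [apply Hbd; lra | apply Hd'; lra].
      + exfalso. assert (Hk0 : ~ 0 < 2 - 2 + 4 * k) by auto. assert (Hc20 : c2 <> 0) by auto.
        apply Rnot_lt_le in Hk0.
        assert (Hc1' : c = 1) by (destruct Hc as [->|]; auto; exfalso; apply Hc20; unfold c2; field; lra).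
        assert (Hu0 : u0 <> 0) by (intros ->; apply Hc20; unfold c2; rewrite Rabs_R0; field; lra).
        assert (Hv0 : v0 <> 0) by (intros ->; apply Hc20; unfold c2; rewrite Rabs_R0; field; lra).
        set (d2 := Rmin d0 1).
        assert (Hd2 : 0 < d2 <= 1 /\ d2 <= d0) by (unfold d2; split; [split; [apply Rmin_glb_lt; lra | apply Rmin_r] | apply Rmin_l]).
        apply (special_case F (fun t => Fdv c gamma t (u t) (v t) (y t) (s t) (z t)) u v y k u0 v0 Cy (c1 + c2) d2);
          auto; try lra.
        * intros t Ht. apply Hdu'. lra.
        * intros t Ht. apply Hdv'. lra.
        * intros t Ht. apply Hd1'. lra.
        * intros t Ht. eapply Rle_trans; [apply Hbd; lra|].
          replace (2 - 2 + 4 * k) with (4 * k) by ring.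
          assert (Hpw : Rpower t (2 - 2 + 2 * k + 2 * INR n) <= Rpower t (4 * k)).
          { unfold Rpower. apply exp_le_inc || (destruct (Req_dec ((2 - 2 + 2 * k + 2 * INR n) * ln t) (4 * k * ln t)) as [Heq|Hneq];
              [rewrite Heq; lra | left; apply exp_increasing]).
            assert (ln t <= 0) by (rewrite <- ln_1; apply ln_le; lra). nra. }
          assert (0 < Rpower t (4 * k)) by apply Rpower_pos.
          assert (c1 * Rpower t (2 - 2 + 2 * k + 2 * INR n) <= c1 * Rpower t (4 * k)) by (apply Rmult_le_compat_l; auto).
          lra.
        * intros t Ht Hy0. rewrite Hc1'. destruct (Hsign t Ht) as [_ [Hxy _]]. apply Fdv_lb; auto.
        * intros t Ht. apply Hsign; auto.
    - destruct (ty_zero_m n m beta gamma s z HNO Hg Hm0) as [d1 [Hd1 Hd1']].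
      set (d0 := Rmin (Rmin du dv) (Rmin ds d1)).
      assert (Hd0 : 0 < d0 /\ d0 <= du /\ d0 <= dv /\ d0 <= ds /\ d0 <= d1).
      { unfold d0. split; [repeat apply Rmin_glb_lt; lra|].
        repeat split.
        - eapply Rle_trans; [apply Rmin_l | apply Rmin_l].
        - eapply Rle_trans; [apply Rmin_l | apply Rmin_r].
        - eapply Rle_trans; [apply Rmin_r | apply Rmin_l].
        - eapply Rle_trans; [apply Rmin_r | apply Rmin_r]. }
      assert (Hbd := F_zero_bound c gamma u v y s n k u0 v0 Cs (1/4) 0 d0 ltac:(lra) Hg ltac:(lra) ltac:(lra)
        ltac:(intros t Ht; apply Hdu'; lra) ltac:(intros t Ht; apply Hdv'; lra)
        ltac:(intros t Ht; apply Hds'; lra) ltac:(intros t Ht; apply Hd1'; lra)).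
      set (c1 := 4 * Rabs u0 * Rabs v0 * (gamma / 2) * Cs ^ 2 / (1/4)) in *.
      set (c2 := 32 * c * Rabs u0 * Rabs v0 * v0 ^ 2 / (1/4)) in *.
      assert (Hc1 : 0 <= c1).
      { unfold c1. unfold Rdiv. apply Rmult_le_pos; [|lra].
        apply Rmult_le_pos; [|apply pow2_ge_0]. apply Rmult_le_pos; [|lra].
        apply Rmult_le_pos; [apply Rmult_le_pos; [lra|apply Rabs_pos] | apply Rabs_pos]. }
      assert (Hc2 : 0 <= c2).
      { unfold c2. unfold Rdiv. apply Rmult_le_pos; [|lra].
        apply Rmult_le_pos; [|apply pow2_ge_0].
        apply Rmult_le_pos; [apply Rmult_le_pos; [apply Rmult_le_pos; lra|apply Rabs_pos] | apply Rabs_pos]. }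
      intros e He. destruct (pow_sum_to0 c1 c2 (2 - 0 + 2 * k + 2 * INR n) (2 - 0 + 4 * k) Hc1 Hc2 ltac:(lra) ltac:(left; lra) e He) as [d [Hd Hd']].
      exists (Rmin d d0). split; [apply Rmin_glb_lt; lra|]. intros t Ht.
      assert (t < d) by (eapply Rlt_le_trans; [apply Ht | apply Rmin_l]).
      assert (t < d0) by (eapply Rlt_le_trans; [apply Ht | apply Rmin_r]).
      eapply Rle_lt_trans; [apply Hbd; lra | apply Hd'; lra]. }
  assert (HF0 := F_zero_all F Hmono Hinf H0lim).
  assert (HFd0 : forall t, 0 < t -> Fdv c gamma t (u t) (v t) (y t) (s t) (z t) = 0).
  { intros t Ht. symmetry. apply (isd_unique F t 0); [|apply HFd; auto].
    apply (isd_ext_loc (fun _ => 0) F t 0 0 (t / 2)); [lra | | reflexivity | apply isd_const].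
    intros x Hx. apply Rabs_def2 in Hx. symmetry. apply HF0. lra. }
  assert (Hus : forall t, 0 < t -> (u t = 0 \/ s t = 0) /\ s t ^ 2 * v t ^ 2 * ((y t - z t) * y t) = 0).
  { intros t Ht. destruct (Hsign t Ht) as [Hy0 [Hxy _]]. apply (Fdv_zero c gamma t); auto; lra. }
  assert (Hu0 : forall t, 0 < t -> u t = 0).
  { apply (u_zero u s); auto.
    - apply (s_nozero n beta s z HNO).
    - intros t Ht. apply Hus; auto. }
  assert (Hvy := v_prop v y).
  assert (Hvy' : forall t, 0 < t -> v t = v 1 / y 1 * y t).
  { apply Hvy. intros t Ht. destruct (Hv t Ht) as [Hv1 _]. destruct (y_ex gamma n m z t Hz Ht) as [Hy1 _].
    destruct (Hsign t Ht) as [Hy0 _]. destruct (HW t Ht) as [_ E2]. rewrite (Hu0 t Ht) in E2.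
    repeat split; auto. lra. }
  set (Cc := v 1 / y 1) in *.
  assert (HCc : Cc = 0).
  { destruct (Req_dec (IZR m) 0) as [Hm0|Hm0].
    - destruct (s_inf n beta s z HNO) as [Rs [HRs HRs']].
      destruct (Hus Rs HRs) as [_ Hz0]. destruct (Hsign Rs HRs) as [Hy0 [_ Hstrict]].
      specialize (Hstrict Hm0). specialize (HRs' Rs (Rle_refl _)).
      assert (Hs0 : 0 < s Rs ^ 2) by (apply pow_lt; lra).
      assert (Hv0 : v Rs ^ 2 = 0).
      { apply Rmult_integral in Hz0. destruct Hz0 as [Hz0|Hz0]; [|lra].
        apply Rmult_integral in Hz0. destruct Hz0 as [Hz0|Hz0]; [lra|auto]. }
      apply sq0 in Hv0. rewrite (Hvy' Rs HRs) in Hv0.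
      apply Rmult_integral in Hv0. destruct Hv0; auto. exfalso; auto.
    - apply Rnot_ne_eq_R || idtac.
      destruct (Req_dec Cc 0) as [|HC]; auto. exfalso.
      destruct (ty_zero_m n m beta gamma s z HNO Hg Hm0) as [d1 [Hd1 Hd1']].
      assert (HCa : 0 < Rabs Cc) by (apply Rabs_pos_lt; auto).
      destruct (Rpower_to0 (k + 1) ltac:(lra) (Rabs Cc / (8 * (Rabs v0 + 1))) ltac:(apply Rdiv_lt_0_compat; [lra | assert (0 <= Rabs v0) by apply Rabs_pos; lra])) as [d2 [Hd2 Hd2']].
      set (t := Rmin (Rmin d1 dv) d2 / 2).
      assert (Ht : 0 < t /\ t < d1 /\ t < dv /\ t < d2).
      { unfold t. assert (0 < Rmin (Rmin d1 dv) d2) by (repeat apply Rmin_glb_lt; lra).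
        assert (Rmin (Rmin d1 dv) d2 <= d1) by (eapply Rle_trans; [apply Rmin_l | apply Rmin_l]).
        assert (Rmin (Rmin d1 dv) d2 <= dv) by (eapply Rle_trans; [apply Rmin_l | apply Rmin_r]).
        assert (Rmin (Rmin d1 dv) d2 <= d2) by apply Rmin_r. lra. }
      specialize (Hd1' t ltac:(lra)). rewrite Rpower_O in Hd1' by lra. fold y in Hd1'.
      specialize (Hdv' t ltac:(lra)). destruct Hdv' as [Hdv' _].
      specialize (Hd2' t ltac:(lra)).
      assert (Htv : t * v t = Cc * (t * y t)) by (rewrite (Hvy' t ltac:(lra)); ring).
      assert (Hl : Rabs Cc * (1 / 4) <= Rabs (t * v t)).
      { rewrite Htv, Rabs_mult. apply Rmult_le_compat_l; [apply Rabs_pos | lra]. }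
      assert (Hr : Rabs (t * v t) <= 2 * Rabs v0 * Rpower t (k + 1)).
      { rewrite Rabs_mult, Rabs_pos_eq by lra. rewrite Rpower_plus, Rpower_1 by lra.
        replace (2 * Rabs v0 * (Rpower t k * t)) with (t * (2 * Rabs v0 * Rpower t k)) by ring.
        apply Rmult_le_compat_l; lra. }
      assert (0 <= Rabs v0) by apply Rabs_pos.
      assert (2 * Rabs v0 * Rpower t (k + 1) <= 2 * (Rabs v0 + 1) * Rpower t (k + 1)).
      { assert (0 < Rpower t (k + 1)) by apply Rpower_pos. nra. }
      assert (2 * (Rabs v0 + 1) * Rpower t (k + 1) < 2 * (Rabs v0 + 1) * (Rabs Cc / (8 * (Rabs v0 + 1)))).
      { apply Rmult_lt_compat_l; [lra | auto]. }
      assert (2 * (Rabs v0 + 1) * (Rabs Cc / (8 * (Rabs v0 + 1))) = Rabs Cc / 4) by (field; lra).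
      lra. }
  apply Hnt. intros r Hr. split; [apply Hu0; auto|]. rewrite (Hvy' r Hr), HCc. ring.
Qed.


Theorem theorem2 (n : nat) (m : Z) (beta gamma : R) (s z u v : R -> R) :
  (1 <= n)%nat -> 0 < beta -> 0 < gamma -> gamma <= 1 ->
  NO_profile n beta s z ->
  C1_pos u -> C2_pos v ->
  ~ (forall r, 0 < r -> u r = 0 /\ v r = 0) ->
  (W_eqs 1 gamma (aux_y gamma n m z) s u v \/
   W_eqs 0 gamma (aux_y gamma n m z) s u v) ->
  (exists k u0 v0 : R, -(1/2) < k /\ asym0_pow u u0 k /\ asym0_pow v v0 k) ->
  decays_W gamma u -> decays_W gamma v ->
  (- 2 * Z.of_nat n < m < 0)%Z.
Proof.
  intros Hn Hb Hg Hg1 HNO Hu Hv Hnt HW HBC Hdu Hdv.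
  assert (Hcase : (- 2 * Z.of_nat n < m < 0)%Z \/ (1 <= IZR m \/ IZR m = 0 \/ IZR m <= -2 * INR n)).
  { destruct (Z_lt_dec (-2 * Z.of_nat n) m) as [H1|H1]; destruct (Z_lt_dec m 0) as [H2|H2].
    - left; split; auto.
    - right. destruct (Z.eq_dec m 0) as [->|Hm]; [right; left; reflexivity|].
      left. apply IZR_le. lia.
    - right. right. right. rewrite INR_IZR_INZ. replace (-2 * IZR (Z.of_nat n)) with (IZR (-2 * Z.of_nat n)) by (rewrite mult_IZR; reflexivity).
      apply IZR_le. lia.
    - right. right. right. rewrite INR_IZR_INZ. replace (-2 * IZR (Z.of_nat n)) with (IZR (-2 * Z.of_nat n)) by (rewrite mult_IZR; reflexivity).
      apply IZR_le. lia. }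
  destruct Hcase as [|Hcase]; auto. exfalso.
  destruct HW as [HW|HW].
  - apply (main_contra 1 n m beta gamma s z u v); auto.
  - apply (main_contra 0 n m beta gamma s z u v); auto.
Qed.
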